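(* Let $(\mu_n)_{n\ge0}$ be a non-increasing sequence of positive numbers such that $\mu_n=O\left(\frac{1}{n^r}\right)$ for some $r>1$. For each $1\le q<\infty$ there is $p_0>1$ such that $H_\mu(\ell^p_A)\subseteq\ell^q_A$ and $C_\mu(\ell^p_A)\subseteq\ell^q_A$ for each $1<p<p_0$. Moreover, the corresponding restrictions $H_\mu:\ell^p_A\to\ell^q_A$ and $C_\mu:\ell^p_A\to\ell^q_A$ are nuclear if $q=1$ and compact if $q>1$. In particular, $H_\mu:\ell^2_A\to\ell^2_A$ and $C_\mu:\ell^2_A\to\ell^2_A$ are well defined compact operators, and they are nuclear if $r>\frac32$.
   Context: $\ell^p_A$ ($1\le p<\infty$) is the space of $f(z)=\sum_{n\ge0}a_nz^n\in H(\mathbb{D})$ with $\sum_n|a_n|^p<\infty$ (norm $(\sum|a_n|^p)^{1/p}$), and $\ell^\infty_A$ those with $\sup_n|a_n|<\infty$; functions are identified with coefficient sequences. $H_\mu:\ell^\infty_A\to\ell^\infty_A$, $H_\mu((a_n)_{n\ge0})=\left(\sum_{n=0}^\infty\mu_{n+k}a_n\right)_{k\ge0}$ and $C_\mu((a_n)_{n\ge0})=\left(\mu_k\sum_{n=0}^ka_n\right)_{k\ge0}$. An operator $T:X\to Y$ is nuclear if $T=\sum_nx_n^*(\cdot)y_n$ with $x_n^*\in X^*$, $y_n\in Y$, $\sum_n\|x_n^*\|\|y_n\|<\infty$. *)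

(* Defs.v *)
From Stdlib Require Import Reals.
From Coquelicot Require Import Coquelicot.
Open Scope R_scope.

(* Sequences of complex coefficients: f(z) = sum a_n z^n identified with (a_n). *)
Definition seqC := nat -> C.

(* x^p for x >= 0 (with 0^p = 0, p > 0). *)
Definition rpow (x p : R) : R := if Rle_dec x 0 then 0 else Rpower x p.

Definition in_lp (p : R) (a : seqC) : Prop :=
  ex_series (fun n => rpow (Cmod (a n)) p).

Definition lp_norm (p : R) (a : seqC) : R :=
  rpow (Series (fun n => rpow (Cmod (a n)) p)) (/ p).

Definition seq_sub (a b : seqC) : seqC := fun n => Cminus (a n) (b n).

(* Hankel-type operator H_mu (a)_k = sum_n mu_{n+k} a_n; mu is real, so the
   complex series is summed componentwise (real and imaginary parts). *)
Definition Hmu (mu : nat -> R) (a : seqC) : seqC :=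
  fun k => (Series (fun n => mu (n + k)%nat * fst (a n)),
            Series (fun n => mu (n + k)%nat * snd (a n))).

Definition Cmu (mu : nat -> R) (a : seqC) : seqC :=
  fun k => Cmult (RtoC (mu k)) (sum_n a k).

Definition bounded_functional (p : R) (phi : seqC -> C) (c : R) : Prop :=
  0 <= c /\
  (forall a b, in_lp p a -> in_lp p b ->
     phi (fun n => Cplus (a n) (b n)) = Cplus (phi a) (phi b)) /\
  (forall (z : C) a, in_lp p a -> phi (fun n => Cmult z (a n)) = Cmult z (phi a)) /\
  (forall a, in_lp p a -> Cmod (phi a) <= c * lp_norm p a).

(* T : l^p_A -> l^q_A is nuclear: T = sum_n x_n^*(.) y_n with
   sum_n ||x_n^*|| ||y_n|| < oo (c n bounds ||x_n^*||), the series converging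
   in l^q_A. *)
Definition nuclear (p q : R) (T : seqC -> seqC) : Prop :=
  exists (x : nat -> seqC -> C) (c : nat -> R) (y : nat -> seqC),
    (forall n, bounded_functional p (x n) (c n)) /\
    (forall n, in_lp q (y n)) /\
    ex_series (fun n => c n * lp_norm q (y n)) /\
    (forall a, in_lp p a ->
       is_lim_seq
         (fun N => lp_norm q (seq_sub (T a)
                     (fun k => sum_n (fun n => Cmult (x n a) (y n k)) N))) 0).

Definition compact_op (p q : R) (T : seqC -> seqC) : Prop :=
  forall (a : nat -> seqC) (M : R),
    (forall j, in_lp p (a j) /\ lp_norm p (a j) <= M) ->
    exists (phi : nat -> nat) (b : seqC),
      (forall j, (phi j < phi (S j))%nat) /\ in_lp q b /\
      is_lim_seq (fun j => lp_norm q (seq_sub (T (a (phi j))) b)) 0.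

(* Main.v *)
Require Import Defs.
From Stdlib Require Import Reals Lra Lia Psatz Classical FunctionalExtensionality IndefiniteDescription.
From Coquelicot Require Import Coquelicot.
Require Import Defs.
Open Scope R_scope.


Lemma rpow_pos_eq x p : 0 < x -> rpow x p = Rpower x p.
Proof. intros H; unfold rpow; destruct (Rle_dec x 0); [lra|auto]. Qed.

Lemma rpow_le0 x p : x <= 0 -> rpow x p = 0.
Proof. intros H; unfold rpow; destruct (Rle_dec x 0); [auto|lra]. Qed.

Lemma rpow_0 p : rpow 0 p = 0.
Proof. apply rpow_le0; lra. Qed.

Lemma Rpower_gt0 x p : 0 < Rpower x p.
Proof. unfold Rpower; apply exp_pos. Qed.

Lemma rpow_ge0 x p : 0 <= rpow x p.
Proof. unfold rpow; destruct (Rle_dec x 0); [lra|left; apply Rpower_gt0]. Qed.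

Lemma rpow_gt0 x p : 0 < x -> 0 < rpow x p.
Proof. intros H; rewrite rpow_pos_eq; auto; apply Rpower_gt0. Qed.

Lemma rpow_eq0 x p : 0 <= x -> rpow x p = 0 -> x = 0.
Proof. intros H H1; destruct H; auto. pose proof (rpow_gt0 x p H); lra. Qed.

Lemma rpow_1 x : 0 <= x -> rpow x 1 = x.
Proof. intros [H|H]; [rewrite rpow_pos_eq; auto; apply Rpower_1; auto| subst; apply rpow_0]. Qed.

Lemma rpow_2 x : 0 <= x -> rpow x 2 = x * x.
Proof.
  intros [H|H]; [|subst; rewrite rpow_0; ring].
  rewrite rpow_pos_eq; auto. replace 2 with (INR 2) by (simpl; ring).
  rewrite Rpower_pow; auto; simpl; ring.
Qed.

Lemma rpow_mono p x y : 0 < p -> 0 <= x <= y -> rpow x p <= rpow y p.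
Proof.
  intros Hp [[Hx|Hx] Hxy].
  - rewrite !rpow_pos_eq; try lra. apply Rle_Rpower_l; lra.
  - subst; rewrite rpow_0; apply rpow_ge0.
Qed.

Lemma rpow_lt_mono p x y : 0 < p -> 0 <= x < y -> rpow x p < rpow y p.
Proof.
  intros Hp [[Hx|Hx] Hxy].
  - rewrite !rpow_pos_eq; try lra. apply Rlt_Rpower_l; lra.
  - subst; rewrite rpow_0; apply rpow_gt0; lra.
Qed.

Lemma rpow_mono_inv p x y : 0 < p -> 0 <= x -> 0 <= y -> rpow x p <= rpow y p -> x <= y.
Proof.
  intros Hp Hx Hy H. destruct (Rle_lt_dec x y); auto.
  pose proof (rpow_lt_mono p y x Hp (conj Hy r)); lra.
Qed.

Lemma rpow_mult x y p : 0 <= x -> 0 <= y -> rpow (x*y) p = rpow x p * rpow y p.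
Proof.
  intros [Hx|Hx] [Hy|Hy]; try (subst; rewrite ?Rmult_0_l, ?Rmult_0_r, ?rpow_0; ring).
  rewrite !rpow_pos_eq; try nra. rewrite Rpower_mult_distr; auto.
Qed.

Lemma rpow_rpow x p t : 0 <= x -> rpow (rpow x p) t = rpow x (p*t).
Proof.
  intros [Hx|Hx]; [|subst; rewrite !rpow_0; auto].
  rewrite (rpow_pos_eq x); auto. rewrite !rpow_pos_eq; auto using Rpower_gt0.
  apply Rpower_mult.
Qed.

Lemma rpow_inv x p : 0 <= x -> p <> 0 -> rpow (rpow x p) (/p) = x.
Proof. intros Hx Hp. rewrite rpow_rpow; auto. rewrite Rinv_r; auto. apply rpow_1; auto. Qed.

Lemma rpow_inv' x p : 0 <= x -> p <> 0 -> rpow (rpow x (/p)) p = x.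
Proof. intros Hx Hp. rewrite rpow_rpow; auto. rewrite Rinv_l; auto. apply rpow_1; auto. Qed.

Lemma rpow_plus x a b : 0 < x -> rpow x (a+b) = rpow x a * rpow x b.
Proof. intros H; rewrite !rpow_pos_eq; auto; apply Rpower_plus. Qed.

Lemma rpow_Rinv x p : 0 < x -> rpow (/x) p = / rpow x p.
Proof.
  intros H. rewrite !rpow_pos_eq; auto; [|apply Rinv_0_lt_compat; auto].
  unfold Rpower. rewrite ln_Rinv; auto. rewrite <- exp_Ropp. f_equal; ring.
Qed.

Lemma rpow_div x y p : 0 <= x -> 0 < y -> rpow (x/y) p = rpow x p / rpow y p.
Proof.
  intros Hx Hy. unfold Rdiv. rewrite rpow_mult; auto.
  rewrite rpow_Rinv; auto. left; apply Rinv_0_lt_compat; auto.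
Qed.

Lemma rpow_le1 x p : 0 <= x <= 1 -> 1 <= p -> rpow x p <= x.
Proof.
  intros [[Hx|Hx] Hx1] Hp; [|subst; rewrite rpow_0; lra].
  rewrite rpow_pos_eq; auto. replace p with (1 + (p-1)) by ring.
  rewrite Rpower_plus, Rpower_1; auto.
  assert (Rpower x (p-1) <= 1).
  { unfold Rpower. apply Rle_trans with (exp 0); [|rewrite exp_0; lra].
    assert (ln x <= 0).
    { destruct Hx1 as [Hx1|Hx1]. left; rewrite <- ln_1; apply ln_increasing; auto. subst; rewrite ln_1; lra. }
    assert ((p-1) * ln x <= 0) by nra.
    destruct H0 as [H0|H0]. left; apply exp_increasing; auto. rewrite H0; lra. }
  assert (0 < Rpower x (p-1)) by apply Rpower_gt0. nra.
Qed.


Lemma is_series_lim (a : nat -> R) (l : R) : is_series a l <-> is_lim_seq (sum_n a) l.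
Proof. split; intro H; exact H. Qed.

Lemma sum_Sn_R (u : nat -> R) n : sum_n u (S n) = sum_n u n + u (S n).
Proof. rewrite sum_Sn; reflexivity. Qed.

Lemma sum_O_R (u : nat -> R) : sum_n u 0 = u 0%nat.
Proof. apply sum_O. Qed.

Lemma sum_n_nonneg (u : nat -> R) N : (forall n, 0 <= u n) -> 0 <= sum_n u N.
Proof. intros H; induction N; [rewrite sum_O_R; auto| rewrite sum_Sn_R; specialize (H (S N)); lra]. Qed.

Lemma sum_n_mono (u v : nat -> R) N : (forall n, (n <= N)%nat -> u n <= v n) -> sum_n u N <= sum_n v N.
Proof.
  intros H; induction N; [rewrite !sum_O_R; apply H; lia|].
  rewrite !sum_Sn_R. assert (u (S N) <= v (S N)) by (apply H; lia).
  assert (sum_n u N <= sum_n v N) by (apply IHN; intros; apply H; lia). lra.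
Qed.

Lemma sum_n_plus_R (u v : nat -> R) N : sum_n (fun n => u n + v n) N = sum_n u N + sum_n v N.
Proof. induction N; [rewrite !sum_O_R; auto| rewrite !sum_Sn_R, IHN; lra]. Qed.

Lemma sum_n_scal_R (c : R) (u : nat -> R) N : sum_n (fun n => c * u n) N = c * sum_n u N.
Proof. induction N; [rewrite !sum_O_R; auto| rewrite !sum_Sn_R, IHN; lra]. Qed.

Lemma sum_n_const_R (c : R) N : sum_n (fun _ => c) N = INR (S N) * c.
Proof. induction N; [rewrite sum_O_R; simpl; lra| rewrite sum_Sn_R, IHN, !S_INR; lra]. Qed.

Lemma sum_n_term_le (u : nat -> R) N n : (forall k, 0 <= u k) -> (n <= N)%nat -> u n <= sum_n u N.
Proof.
  intros H Hn. induction N.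
  - assert (n = 0%nat) by lia; subst; rewrite sum_O_R; lra.
  - rewrite sum_Sn_R. destruct (Nat.eq_dec n (S N)).
    + subst. pose proof (sum_n_nonneg u N H); lra.
    + assert (u n <= sum_n u N) by (apply IHN; lia). specialize (H (S N)); lra.
Qed.

Lemma ser_bound (u : nat -> R) B : (forall n, 0 <= u n) -> (forall N, sum_n u N <= B) ->
  ex_series u /\ Series u <= B.
Proof.
  intros H0 HB.
  destruct (ex_finite_lim_seq_incr (sum_n u) B) as [l Hl]; auto.
  { intro n; rewrite sum_Sn_R; specialize (H0 (S n)); lra. }
  assert (is_series u l) by (apply is_series_lim; auto).
  split; [exists l; auto|]. rewrite (is_series_unique _ _ H).
  assert (Rbar_le l B). { apply (is_lim_seq_le (sum_n u) (fun _ => B)); auto. apply is_lim_seq_const. }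
  simpl in H1; auto.
Qed.

Lemma psum_le_series (u : nat -> R) N : (forall n, 0 <= u n) -> ex_series u -> sum_n u N <= Series u.
Proof.
  intros H0 [l Hl]. rewrite (is_series_unique _ _ Hl).
  apply (is_lim_seq_incr_compare (sum_n u) l); [apply is_series_lim; auto|].
  intro n; rewrite sum_Sn_R; specialize (H0 (S n)); lra.
Qed.

Lemma term_le_series (u : nat -> R) n : (forall k, 0 <= u k) -> ex_series u -> u n <= Series u.
Proof. intros H0 H. eapply Rle_trans; [apply (sum_n_term_le u n n); auto|apply psum_le_series; auto]. Qed.

Lemma Series_ge0 (u : nat -> R) : (forall k, 0 <= u k) -> ex_series u -> 0 <= Series u.
Proof. intros H0 H. eapply Rle_trans; [apply (H0 0%nat)|apply term_le_series; auto]. Qed.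

Lemma ex_series_cmp (u v : nat -> R) : (forall n, 0 <= u n <= v n) -> ex_series v -> ex_series u.
Proof.
  intros H Hv. apply (ex_series_le u v); auto.
  intro n. change (Rabs (u n) <= v n). rewrite Rabs_right; [apply H|apply Rle_ge, H].
Qed.

Lemma Series_nonneg_le (u v : nat -> R) : (forall n, 0 <= u n <= v n) -> ex_series v -> Series u <= Series v.
Proof. apply Series_le. Qed.

Lemma ex_series_scal (c : R) (u : nat -> R) : ex_series u -> ex_series (fun n => c * u n).
Proof. intros H; exact (ex_series_scal_l c u H). Qed.

Lemma ex_series_plus_R (u v : nat -> R) : ex_series u -> ex_series v -> ex_series (fun n => u n + v n).
Proof. intros H1 H2; exact (ex_series_plus u v H1 H2). Qed.

Lemma ex_series_minus_R (u v : nat -> R) : ex_series u -> ex_series v -> ex_series (fun n => u n - v n).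
Proof. intros H1 H2; exact (ex_series_minus u v H1 H2). Qed.

Definition mask (N : nat) (u : nat -> R) : nat -> R := fun k => if Nat.leb k N then 0 else u k.
Definition keep (N : nat) (u : nat -> R) : nat -> R := fun k => if Nat.leb k N then u k else 0.

Lemma sum_mask (u : nat -> R) N M : sum_n (mask N u) M = sum_n u M - sum_n u (Nat.min M N).
Proof.
  induction M.
  - rewrite !sum_O_R. unfold mask. simpl. ring.
  - rewrite !sum_Sn_R, IHM. unfold mask. destruct (Nat.leb (S M) N) eqn:E.
    + apply Nat.leb_le in E. rewrite !Nat.min_l by lia. rewrite sum_Sn_R; lra.
    + apply Nat.leb_gt in E. rewrite !Nat.min_r by lia. lra.
Qed.

Lemma is_series_mask (u : nat -> R) l N : is_series u l -> is_series (mask N u) (l - sum_n u N).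
Proof.
  intros H. apply is_series_lim. apply is_series_lim in H.
  apply is_lim_seq_ext_loc with (fun M => sum_n u M - sum_n u N).
  { exists N. intros M HM. rewrite sum_mask, Nat.min_r; auto. }
  apply (is_lim_seq_minus' _ _ l (sum_n u N)); auto. apply is_lim_seq_const.
Qed.

Lemma ex_series_mask (u : nat -> R) N : ex_series u -> ex_series (mask N u).
Proof. intros [l H]; eexists; apply is_series_mask; eauto. Qed.

Lemma Series_mask (u : nat -> R) N : ex_series u -> Series (mask N u) = Series u - sum_n u N.
Proof. intros [l H]. rewrite (is_series_unique _ _ H). apply is_series_unique, is_series_mask; auto. Qed.

Lemma tail_lim0 (u : nat -> R) : ex_series u -> is_lim_seq (fun N => Series (mask N u)) 0.
Proof.
  intros Hu. apply is_lim_seq_ext with (fun N => Series u - sum_n u N).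
  { intro N; rewrite Series_mask; auto. }
  replace (Finite 0) with (Rbar_minus (Series u) (Series u)) by (simpl; f_equal; ring).
  apply is_lim_seq_minus'. apply is_lim_seq_const.
  destruct Hu as [l Hl]. rewrite (is_series_unique _ _ Hl). apply is_series_lim; auto.
Qed.

Lemma sum_keep (u : nat -> R) N M : (N <= M)%nat -> sum_n (keep N u) M = sum_n u N.
Proof.
  intros H. induction H.
  - apply sum_n_ext_loc. intros n Hn. unfold keep. apply Nat.leb_le in Hn. rewrite Hn; auto.
  - rewrite sum_Sn_R, IHle. unfold keep. destruct (Nat.leb (S m) N) eqn:E.
    apply Nat.leb_le in E; lia. lra.
Qed.

Lemma is_series_keep (u : nat -> R) N : is_series (keep N u) (sum_n u N).
Proof.
  apply is_series_lim. apply is_lim_seq_ext_loc with (fun _ => sum_n u N).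
  exists N. intros M HM. rewrite sum_keep; auto. apply is_lim_seq_const.
Qed.

Lemma shift_series (u : nat -> R) n l : is_series (fun k => u (n + k)%nat) l ->
  is_series (fun k => if Nat.leb n k then u k else 0) l.
Proof.
  intros H. destruct n.
  - eapply is_series_ext; [|exact H]. intro k; simpl; auto.
  - apply is_series_decr_n with (S n); [lia|].
    assert (E0 : plus l (opp (sum_n (fun k => if Nat.leb (S n) k then u k else 0) (Init.Nat.pred (S n)))) = l).
    { simpl. rewrite (sum_n_ext_loc _ (fun _ => 0)).
      * rewrite sum_n_const_R. change (l + - (INR (S n) * 0) = l). ring.
      * intros m Hm. destruct m; auto. destruct (Nat.leb n m) eqn:E; auto. apply Nat.leb_le in E; lia. }
    match goal with |- is_series _ ?L => replace L with l by (symmetry; exact E0) end. eapply is_series_ext; [|exact H].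
    intro k. simpl. destruct (Nat.leb n (n+k)) eqn:E; auto. apply Nat.leb_gt in E; lia.
Qed.

Lemma ev_finite (P : nat -> nat -> Prop) N :
  (forall n, (n <= N)%nat -> exists J, forall j, (J <= j)%nat -> P n j) ->
  exists J, forall j, (J <= j)%nat -> forall n, (n <= N)%nat -> P n j.
Proof.
  induction N; intros H.
  - destruct (H 0%nat) as [J HJ]; auto. exists J; intros j Hj n Hn. assert (n = 0%nat) by lia; subst; auto.
  - destruct IHN as [J1 H1]. intros; apply H; lia.
    destruct (H (S N)) as [J2 H2]; auto.
    exists (Nat.max J1 J2). intros j Hj n Hn. destruct (Nat.eq_dec n (S N)).
    subst; apply H2; lia. apply H1; lia.
Qed.


Definition Lp (p : R) (u : nat -> R) : R := rpow (Series (fun n => rpow (u n) p)) (/p).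

Lemma Lp_ge0 p u : 0 <= Lp p u.
Proof. apply rpow_ge0. Qed.

Lemma Lp_pow p u : 0 < p -> (forall n, 0 <= u n) -> ex_series (fun n => rpow (u n) p) ->
  rpow (Lp p u) p = Series (fun n => rpow (u n) p).
Proof.
  intros Hp H0 H. unfold Lp. apply rpow_inv'. apply Series_ge0; auto. intros; apply rpow_ge0. lra.
Qed.

Lemma coord_le_Lp p u n : 0 < p -> (forall n, 0 <= u n) -> ex_series (fun n => rpow (u n) p) ->
  u n <= Lp p u.
Proof.
  intros Hp H0 H. apply (rpow_mono_inv p); auto. apply Lp_ge0.
  rewrite Lp_pow; auto. apply (term_le_series (fun n => rpow (u n) p)); auto. intros; apply rpow_ge0.
Qed.

Lemma ser_dom (u v : nat -> R) : (forall n, 0 <= u n <= v n) -> ex_series v -> ex_series u /\ Series u <= Series v.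
Proof. intros H Hv; split; [eapply ex_series_cmp; eauto| apply Series_le; auto]. Qed.

Definition conj_exp (p : R) : R := p / (p - 1).

Lemma conj_exp_gt1 p : 1 < p -> 1 < conj_exp p.
Proof.
  intros H. unfold conj_exp. apply Rmult_lt_reg_r with (p-1); [lra|].
  unfold Rdiv. rewrite Rmult_assoc, Rinv_l by lra. lra.
Qed.

Lemma conj_exp_eq p : 1 < p -> conj_exp p = / (p - 1) + 1.
Proof. intros H. unfold conj_exp. field. lra. Qed.

Lemma young p x y : 1 < p -> 0 <= x -> 0 <= y -> x * y <= rpow x p + rpow y (conj_exp p).
Proof.
  intros Hp Hx0 Hy0. pose proof (rpow_ge0 x p) as G1. pose proof (rpow_ge0 y (conj_exp p)) as G2.
  destruct Hx0 as [Hx|Hx]; [|subst x; lra].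
  destruct Hy0 as [Hy|Hy]; [|subst y; lra].
  destruct (Rle_lt_dec y (rpow x (p-1))).
  - assert (x * y <= x * rpow x (p-1)) by (apply Rmult_le_compat_l; lra).
    replace (x * rpow x (p-1)) with (rpow x p) in H.
    + pose proof (rpow_ge0 y (conj_exp p)); lra.
    + rewrite <- (rpow_1 x) at 2 by lra. rewrite <- rpow_plus; auto. f_equal; ring.
  - assert (x < rpow y (/(p-1))).
    { rewrite <- (rpow_inv x (p-1)) by lra. apply rpow_lt_mono.
      apply Rinv_0_lt_compat; lra. split; auto. apply rpow_ge0. }
    assert (x * y <= rpow y (/(p-1)) * y) by (apply Rmult_le_compat_r; lra).
    replace (rpow y (/(p-1)) * y) with (rpow y (conj_exp p)) in H0.
    + pose proof (rpow_ge0 x p); lra.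
    + rewrite <- (rpow_1 y) at 3 by lra. rewrite <- rpow_plus; auto. f_equal. apply conj_exp_eq; auto.
Qed.

Lemma series_zero_bound (u : nat -> R) : (forall n, u n = 0) -> ex_series u /\ Series u <= 0.
Proof.
  intros H. apply ser_bound. intros; rewrite H; lra.
  intros N. rewrite (sum_n_ext _ (fun _ => 0)) by auto. rewrite sum_n_const_R. lra.
Qed.

Lemma holder p (u w : nat -> R) : 1 < p -> (forall n, 0 <= u n) -> (forall n, 0 <= w n) ->
  ex_series (fun n => rpow (u n) p) -> ex_series (fun n => rpow (w n) (conj_exp p)) ->
  ex_series (fun n => u n * w n) /\ Series (fun n => u n * w n) <= 2 * Lp p u * Lp (conj_exp p) w.
Proof.
  intros Hp Hu Hw Su Sw. set (e := conj_exp p) in *.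
  assert (He : 1 < e) by (apply conj_exp_gt1; auto).
  set (l := Lp p u). set (v := Lp e w).
  assert (Hl : 0 <= l) by apply Lp_ge0. assert (Hv : 0 <= v) by apply Lp_ge0.
  assert (ul : forall n, u n <= l) by (intros; apply coord_le_Lp; auto; lra).
  assert (wv : forall n, w n <= v) by (intros; apply coord_le_Lp; auto; lra).
  destruct Hl as [Hl|Hl].
  2:{ destruct (series_zero_bound (fun n => u n * w n)) as [A B].
      intro n; specialize (ul n); specialize (Hu n); assert (u n = 0) by lra. rewrite H; ring.
      split; auto. rewrite <- Hl. lra. }
  destruct Hv as [Hv|Hv].
  2:{ destruct (series_zero_bound (fun n => u n * w n)) as [A B].
      intro n; specialize (wv n); specialize (Hw n); assert (w n = 0) by lra. rewrite H; ring.
      split; auto. rewrite <- Hv. lra. }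
  assert (Pl : rpow l p = Series (fun n => rpow (u n) p)) by (apply Lp_pow; auto; lra).
  assert (Pv : rpow v e = Series (fun n => rpow (w n) e)) by (apply Lp_pow; auto; lra).
  assert (Pl0 : 0 < rpow l p) by (apply rpow_gt0; auto).
  assert (Pv0 : 0 < rpow v e) by (apply rpow_gt0; auto).
  set (b := fun n => (l * v / rpow l p) * rpow (u n) p + (l * v / rpow v e) * rpow (w n) e).
  assert (Eb : ex_series b).
  { apply ex_series_plus_R; apply ex_series_scal; auto. }
  assert (Sb : Series b = 2 * l * v).
  { unfold b. rewrite Series_plus by (apply ex_series_scal; auto).
    rewrite !Series_scal_l. rewrite <- Pl, <- Pv. field. lra. }
  assert (Hb : forall n, 0 <= u n * w n <= b n).
  { intro n. split. apply Rmult_le_pos; auto.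
    pose proof (young p (u n / l) (w n / v) Hp) as Y.
    rewrite !rpow_div in Y; auto.
    assert (u n * w n = l * v * ((u n / l) * (w n / v))) by (field; lra).
    rewrite H. unfold b. fold e in Y.
    replace (l * v / rpow l p * rpow (u n) p + l * v / rpow v e * rpow (w n) e)
      with (l * v * (rpow (u n) p / rpow l p + rpow (w n) e / rpow v e)) by (field; lra).
    apply Rmult_le_compat_l. nra. apply Y.
    apply Rdiv_le_0_compat; auto. apply Rdiv_le_0_compat; auto. }
  destruct (ser_dom _ _ Hb Eb) as [A B]. split; auto. lra.
Qed.

Lemma lp_norm_Lp p a : lp_norm p a = Lp p (fun n => Cmod (a n)).
Proof. reflexivity. Qed.

Lemma coord_le_norm p a n : 0 < p -> in_lp p a -> Cmod (a n) <= lp_norm p a.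
Proof. intros Hp H. apply (coord_le_Lp p (fun n => Cmod (a n))); auto. intros; apply Cmod_ge_0. Qed.

Lemma lp_norm_ge0 p a : 0 <= lp_norm p a.
Proof. apply rpow_ge0. Qed.

Lemma lp_series_le p a M : 0 < p -> in_lp p a -> lp_norm p a <= M ->
  Series (fun n => rpow (Cmod (a n)) p) <= rpow M p.
Proof.
  intros Hp H HM. rewrite <- (Lp_pow p (fun n => Cmod (a n))); auto.
  apply rpow_mono; auto. split; [apply Lp_ge0|auto]. intros; apply Cmod_ge_0.
Qed.


Lemma fst_le_Cmod (c : C) : Rabs (fst c) <= Cmod c.
Proof. apply re_le_Cmod. Qed.

Lemma snd_le_Cmod (c : C) : Rabs (snd c) <= Cmod c.
Proof.
  destruct c as [x y]. simpl. pose proof (re_le_Cmod (y, x)). unfold Cmod in *. simpl in *.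
  rewrite Rplus_comm; auto.
Qed.

Lemma Cmod_pair_le (x y : R) : Cmod (x, y) <= Rabs x + Rabs y.
Proof.
  unfold Cmod; cbn [fst snd].
  rewrite <- (sqrt_pow2 (Rabs x + Rabs y)) by (pose proof (Rabs_pos x); pose proof (Rabs_pos y); lra).
  apply sqrt_le_1_alt. rewrite <- (pow2_abs x), <- (pow2_abs y).
  pose proof (Rabs_pos x); pose proof (Rabs_pos y). nra.
Qed.

Lemma Cmod_RtoC_nonneg (r : R) : 0 <= r -> Cmod (RtoC r) = r.
Proof. intros H. rewrite Cmod_R. apply Rabs_pos_eq; auto. Qed.

Definition KerOp (y : nat -> nat -> R) (a : seqC) : seqC :=
  fun k => (Series (fun n => y n k * fst (a n)), Series (fun n => y n k * snd (a n))).

Lemma ker_abs y a k : (forall n, 0 <= y n k) -> ex_series (fun n => y n k * Cmod (a n)) ->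
  ex_series (fun n => y n k * fst (a n)) /\ ex_series (fun n => y n k * snd (a n)) /\
  Cmod (KerOp y a k) <= 2 * Series (fun n => y n k * Cmod (a n)).
Proof.
  intros H0 H.
  assert (E1 : ex_series (fun n => Rabs (y n k * fst (a n)))).
  { apply ex_series_cmp with (fun n => y n k * Cmod (a n)); auto. intro n. split. apply Rabs_pos.
    rewrite Rabs_mult, Rabs_pos_eq by auto. apply Rmult_le_compat_l; auto. apply fst_le_Cmod. }
  assert (E2 : ex_series (fun n => Rabs (y n k * snd (a n)))).
  { apply ex_series_cmp with (fun n => y n k * Cmod (a n)); auto. intro n. split. apply Rabs_pos.
    rewrite Rabs_mult, Rabs_pos_eq by auto. apply Rmult_le_compat_l; auto. apply snd_le_Cmod. }
  split; [apply ex_series_Rabs; auto|]. split; [apply ex_series_Rabs; auto|].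
  unfold KerOp. eapply Rle_trans; [apply Cmod_pair_le|].
  pose proof (Series_Rabs _ E1). pose proof (Series_Rabs _ E2).
  assert (Series (fun n => Rabs (y n k * fst (a n))) <= Series (fun n => y n k * Cmod (a n))).
  { apply Series_le; auto. intro n. split. apply Rabs_pos.
    rewrite Rabs_mult, Rabs_pos_eq by auto. apply Rmult_le_compat_l; auto. apply fst_le_Cmod. }
  assert (Series (fun n => Rabs (y n k * snd (a n))) <= Series (fun n => y n k * Cmod (a n))).
  { apply Series_le; auto. intro n. split. apply Rabs_pos.
    rewrite Rabs_mult, Rabs_pos_eq by auto. apply Rmult_le_compat_l; auto. apply snd_le_Cmod. }
  lra.
Qed.

Lemma ker_sub y a b k : (forall n, 0 <= y n k) ->
  ex_series (fun n => y n k * Cmod (a n)) -> ex_series (fun n => y n k * Cmod (b n)) ->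
  KerOp y (seq_sub a b) k = Cminus (KerOp y a k) (KerOp y b k).
Proof.
  intros H0 Ha Hb. destruct (ker_abs y a k H0 Ha) as [A1 [A2 _]].
  destruct (ker_abs y b k H0 Hb) as [B1 [B2 _]].
  unfold KerOp, seq_sub, Cminus, Cplus, Copp; simpl. f_equal.
  - rewrite <- Rminus_def, <- Series_minus by auto. apply Series_ext; intro; simpl; ring.
  - rewrite <- Rminus_def, <- Series_minus by auto. apply Series_ext; intro; simpl; ring.
Qed.

Lemma ker_add y a b k : (forall n, 0 <= y n k) ->
  ex_series (fun n => y n k * Cmod (a n)) -> ex_series (fun n => y n k * Cmod (b n)) ->
  KerOp y (fun n => Cplus (a n) (b n)) k = Cplus (KerOp y a k) (KerOp y b k).
Proof.
  intros H0 Ha Hb. destruct (ker_abs y a k H0 Ha) as [A1 [A2 _]].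
  destruct (ker_abs y b k H0 Hb) as [B1 [B2 _]].
  unfold KerOp, Cplus; simpl. f_equal.
  - rewrite <- Series_plus by auto. apply Series_ext; intro; simpl; ring.
  - rewrite <- Series_plus by auto. apply Series_ext; intro; simpl; ring.
Qed.

Lemma ker_scal y (z : C) a k : (forall n, 0 <= y n k) ->
  ex_series (fun n => y n k * Cmod (a n)) ->
  KerOp y (fun n => Cmult z (a n)) k = Cmult z (KerOp y a k).
Proof.
  intros H0 Ha. destruct (ker_abs y a k H0 Ha) as [A1 [A2 _]].
  unfold KerOp, Cmult; simpl. f_equal.
  - rewrite <- !Series_scal_l. rewrite <- Series_minus by (apply ex_series_scal; auto).
    apply Series_ext; intro; simpl; ring.
  - rewrite <- !Series_scal_l. rewrite <- Series_plus by (apply ex_series_scal; auto).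
    apply Series_ext; intro; simpl; ring.
Qed.

Definition ylo (N : nat) (y : nat -> nat -> R) : nat -> nat -> R := fun n k => if Nat.leb n N then y n k else 0.
Definition yhi (N : nat) (y : nat -> nat -> R) : nat -> nat -> R := fun n k => if Nat.leb n N then 0 else y n k.

Lemma ker_split y N d k : (forall n, 0 <= y n k) -> ex_series (fun n => y n k * Cmod (d n)) ->
  KerOp y d k = Cplus (KerOp (ylo N y) d k) (KerOp (yhi N y) d k).
Proof.
  intros H0 H.
  assert (G : forall n, 0 <= y n k * Cmod (d n)) by (intro n; apply Rmult_le_pos; auto; apply Cmod_ge_0).
  assert (Hlo : ex_series (fun n => ylo N y n k * Cmod (d n))).
  { apply ex_series_cmp with (fun n => y n k * Cmod (d n)); auto. intro n; unfold ylo.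
    specialize (G n); destruct (Nat.leb n N); split; lra. }
  assert (Hhi : ex_series (fun n => yhi N y n k * Cmod (d n))).
  { apply ex_series_cmp with (fun n => y n k * Cmod (d n)); auto. intro n; unfold yhi.
    specialize (G n); destruct (Nat.leb n N); split; lra. }
  assert (P1 : forall n, 0 <= ylo N y n k) by (intro n; unfold ylo; destruct (Nat.leb n N); auto; lra).
  assert (P2 : forall n, 0 <= yhi N y n k) by (intro n; unfold yhi; destruct (Nat.leb n N); auto; lra).
  destruct (ker_abs _ d k P1 Hlo) as [A1 [A2 _]].
  destruct (ker_abs _ d k P2 Hhi) as [B1 [B2 _]].
  unfold KerOp, Cplus; simpl. f_equal.
  - rewrite <- Series_plus by auto. apply Series_ext; intro n; unfold ylo, yhi; destruct (Nat.leb n N); ring.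
  - rewrite <- Series_plus by auto. apply Series_ext; intro n; unfold ylo, yhi; destruct (Nat.leb n N); ring.
Qed.

Lemma sum_series_swap (g : nat -> nat -> R) K : (forall k, ex_series (fun n => g n k)) ->
  ex_series (fun n => sum_n (fun k => g n k) K) /\
  sum_n (fun k => Series (fun n => g n k)) K = Series (fun n => sum_n (fun k => g n k) K).
Proof.
  intros H. induction K.
  - rewrite sum_O_R. split.
    + eapply ex_series_ext; [|apply (H 0%nat)]. intro n; rewrite sum_O_R; auto.
    + apply Series_ext; intro n; rewrite sum_O_R; auto.
  - destruct IHK as [E1 E2]. split.
    + eapply ex_series_ext; [|apply (ex_series_plus_R _ _ E1 (H (S K)))]. intro n; rewrite sum_Sn_R; auto.
    + rewrite sum_Sn_R, E2, <- Series_plus by auto. apply Series_ext; intro n; rewrite sum_Sn_R; auto.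
Qed.

Lemma tonelli (f : nat -> nat -> R) (F : nat -> R) : (forall n k, 0 <= f n k) ->
  (forall n, is_series (f n) (F n)) -> ex_series F ->
  ex_series (fun k => Series (fun n => f n k)) /\ Series (fun k => Series (fun n => f n k)) <= Series F.
Proof.
  intros H0 HF EF.
  assert (EFn : forall n, ex_series (f n)) by (intro n; exists (F n); auto).
  assert (SF : forall n, Series (f n) = F n) by (intro n; apply is_series_unique; auto).
  assert (Ek : forall k, ex_series (fun n => f n k)).
  { intro k. apply ex_series_cmp with F; auto. intro n. split; auto. rewrite <- SF.
    apply term_le_series; auto. }
  apply ser_bound.
  - intro k; apply Series_ge0; auto.
  - intro K. destruct (sum_series_swap f K Ek) as [E1 E2]. rewrite E2.
    apply Series_le; auto. intro n; split. apply sum_n_nonneg; auto.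
    rewrite <- SF. apply psum_le_series; auto.
Qed.


Lemma in_lp1_iff b : in_lp 1 b <-> ex_series (fun k => Cmod (b k)).
Proof.
  unfold in_lp; split; apply ex_series_ext; intro n; rewrite rpow_1; auto; apply Cmod_ge_0.
Qed.

Lemma lp1_eq b : in_lp 1 b -> lp_norm 1 b = Series (fun k => Cmod (b k)).
Proof.
  intros H. unfold lp_norm. rewrite Rinv_1.
  rewrite (Series_ext _ (fun k => Cmod (b k))) by (intro; apply rpow_1, Cmod_ge_0).
  apply rpow_1. apply Series_ge0; [intro; apply Cmod_ge_0| apply in_lp1_iff; auto].
Qed.

Lemma conj_exp_2 : conj_exp 2 = 2.
Proof. unfold conj_exp. field. Qed.

Lemma row_le (y : nat -> nat -> R) (Sm : nat -> R) n k : (forall n k, 0 <= y n k) -> (forall n, is_series (y n) (Sm n)) -> y n k <= Sm n.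
Proof.
  intros H0 HS. rewrite <- (is_series_unique _ _ (HS n)). apply term_le_series; auto. exists (Sm n); auto.
Qed.

Lemma L1_facts p (y : nat -> nat -> R) (Sm : nat -> R) : 1 < p -> (forall n k, 0 <= y n k) -> (forall n, is_series (y n) (Sm n)) ->
  ex_series (fun n => rpow (Sm n) (conj_exp p)) ->
  forall a, in_lp p a ->
  (forall k, ex_series (fun n => y n k * Cmod (a n))) /\
  ex_series (fun n => Cmod (a n) * Sm n) /\
  in_lp 1 (KerOp y a) /\
  Series (fun k => Cmod (KerOp y a k)) <= 2 * Series (fun n => Cmod (a n) * Sm n).
Proof.
  intros Hp H0 HS HSe a Ha.
  assert (He : 1 < conj_exp p) by (apply conj_exp_gt1; auto).
  assert (Hal : forall n, 0 <= Cmod (a n)) by (intro; apply Cmod_ge_0).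
  assert (S0 : forall n, 0 <= Sm n) by (intro n; eapply Rle_trans; [apply (H0 n 0%nat)|apply row_le; auto]).
  assert (Ek : forall k, ex_series (fun n => y n k * Cmod (a n))).
  { intro k. destruct (holder p (fun n => Cmod (a n)) (fun n => y n k) Hp Hal (fun n => H0 n k) Ha) as [E _].
    - apply ex_series_cmp with (fun n => rpow (Sm n) (conj_exp p)); auto. intro n; split. apply rpow_ge0.
      apply rpow_mono. lra. split; auto. apply row_le; auto.
    - eapply ex_series_ext; [|exact E]. intro; simpl; ring. }
  destruct (holder p (fun n => Cmod (a n)) Sm Hp Hal S0 Ha HSe) as [ES _].
  destruct (tonelli (fun n k => Cmod (a n) * y n k) (fun n => Cmod (a n) * Sm n)) as [T1 T2]; auto.
  { intros; apply Rmult_le_pos; auto. }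
  { intro n. exact (is_series_scal_l (Cmod (a n)) (y n) (Sm n) (HS n)). }
  assert (Bk : forall k, Cmod (KerOp y a k) <= 2 * Series (fun n => Cmod (a n) * y n k)).
  { intro k. destruct (ker_abs y a k (fun n => H0 n k) (Ek k)) as [_ [_ B]].
    rewrite (Series_ext _ (fun n => y n k * Cmod (a n))); auto. intro; ring. }
  assert (EB : ex_series (fun k => 2 * Series (fun n => Cmod (a n) * y n k))) by (apply ex_series_scal; auto).
  assert (EC : ex_series (fun k => Cmod (KerOp y a k))).
  { apply ex_series_cmp with (fun k => 2 * Series (fun n => Cmod (a n) * y n k)); auto.
    intro k; split; auto; apply Cmod_ge_0. }
  split; auto. split; auto. split; [apply in_lp1_iff; auto|].
  eapply Rle_trans; [apply Series_le; [|exact EB]|].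
  - intro k; split; auto; apply Cmod_ge_0.
  - rewrite Series_scal_l. lra.
Qed.

Lemma L2_facts (y : nat -> nat -> R) (V : nat -> R) : (forall n k, 0 <= y n k) -> (forall n, is_series (fun k => rpow (y n k) 2) (V n)) ->
  ex_series V ->
  forall a, in_lp 2 a ->
  (forall k, ex_series (fun n => y n k * Cmod (a n))) /\
  in_lp 2 (KerOp y a) /\
  Series (fun k => rpow (Cmod (KerOp y a k)) 2) <= 16 * Series (fun n => rpow (Cmod (a n)) 2) * Series V.
Proof.
  intros H0 HV EV a Ha.
  assert (Hp : 1 < 2) by lra.
  assert (Hal : forall n, 0 <= Cmod (a n)) by (intro; apply Cmod_ge_0).
  assert (Ha' : ex_series (fun n => rpow (Cmod (a n)) 2)) by exact Ha.
  assert (Erow : forall k, ex_series (fun n => rpow (y n k) 2)).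
  { intro k. apply ex_series_cmp with V; auto. intro n; split. apply rpow_ge0.
    apply (row_le (fun n k => rpow (y n k) 2) V n k); auto. intros; apply rpow_ge0. }
  assert (Hk : forall k, ex_series (fun n => Cmod (a n) * y n k) /\
     Series (fun n => Cmod (a n) * y n k) <= 2 * Lp 2 (fun n => Cmod (a n)) * Lp 2 (fun n => y n k)).
  { intro k. pose proof (holder 2 (fun n => Cmod (a n)) (fun n => y n k) Hp Hal (fun n => H0 n k) Ha).
    rewrite conj_exp_2 in H. apply H. apply Erow. }
  assert (Ek : forall k, ex_series (fun n => y n k * Cmod (a n))).
  { intro k. eapply ex_series_ext; [|apply (Hk k)]. intro; simpl; ring. }
  destruct (tonelli (fun n k => rpow (y n k) 2) V) as [T1 T2]; auto.
  { intros; apply rpow_ge0. }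
  set (A := Series (fun n => rpow (Cmod (a n)) 2)).
  assert (Bk : forall k, rpow (Cmod (KerOp y a k)) 2 <= 16 * A * Series (fun n => rpow (y n k) 2)).
  { intro k. destruct (ker_abs y a k (fun n => H0 n k) (Ek k)) as [_ [_ B]].
    destruct (Hk k) as [_ B2].
    rewrite (Series_ext (fun n => y n k * Cmod (a n)) (fun n => Cmod (a n) * y n k)) in B by (intro; ring).
    set (L1 := Lp 2 (fun n => Cmod (a n))) in *. set (L2 := Lp 2 (fun n => y n k)) in *.
    assert (P1 : rpow L1 2 = A) by (apply Lp_pow; auto; lra).
    assert (P2 : rpow L2 2 = Series (fun n => rpow (y n k) 2)) by (apply Lp_pow; auto; lra).
    rewrite <- P1, <- P2. rewrite !rpow_2 by (apply Cmod_ge_0 || apply Lp_ge0).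
    assert (0 <= L1) by apply Lp_ge0. assert (0 <= L2) by apply Lp_ge0.
    pose proof (Cmod_ge_0 (KerOp y a k)).
    assert (Cmod (KerOp y a k) <= 4 * L1 * L2) by lra.
    assert (0 <= L1 * L2) by nra. nra. }
  assert (A0 : 0 <= A) by (apply Series_ge0; auto; intro; apply rpow_ge0).
  assert (EB : ex_series (fun k => 16 * A * Series (fun n => rpow (y n k) 2))) by (apply ex_series_scal; auto).
  split; auto. split.
  - unfold in_lp. apply ex_series_cmp with (fun k => 16 * A * Series (fun n => rpow (y n k) 2)); auto.
    intro k; split; auto; apply rpow_ge0.
  - eapply Rle_trans; [apply Series_le; [|exact EB]|].
    + intro k; split; auto; apply rpow_ge0.
    + rewrite Series_scal_l. nra.
Qed.


Definition incr (f : nat -> nat) := forall j, (f j < f (S j))%nat.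

Lemma incr_ge f : incr f -> forall j, (j <= f j)%nat.
Proof. intros H j; induction j; [lia| specialize (H j); lia]. Qed.

Lemma incr_mono f : incr f -> forall i j, (i < j)%nat -> (f i < f j)%nat.
Proof.
  intros H i j Hij. induction Hij; [apply H|]. specialize (H m); lia.
Qed.

Lemma incr_comp f g : incr f -> incr g -> incr (fun x => f (g x)).
Proof. intros Hf Hg j. apply incr_mono; auto. Qed.

Definition Rcv (v : nat -> R) (l : R) := forall eps, 0 < eps -> exists J, forall j, (J <= j)%nat -> Rabs (v j - l) < eps.
Definition Ccv (v : nat -> C) (l : C) := forall eps, 0 < eps -> exists J, forall j, (J <= j)%nat -> Cmod (Cminus (v j) l) < eps.

Lemma Rcv_sub v l f : Rcv v l -> (forall j, (j <= f j)%nat) -> Rcv (fun j => v (f j)) l.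
Proof.
  intros H Hf eps He. destruct (H eps He) as [J HJ]. exists J. intros j Hj. apply HJ. specialize (Hf j); lia.
Qed.

Lemma extract_R (u : nat -> R) M : (forall j, Rabs (u j) <= M) ->
  exists f, incr f /\ exists l, Rcv (fun j => u (f j)) l.
Proof.
  intros HM. destruct (Bolzano_Weierstrass u (fun c => -M <= c <= M) (compact_P3 (-M) M)) as [l Hl].
  { intro n; specialize (HM n); apply Rabs_le_between in HM; lra. }
  assert (G : forall N k : nat, exists p, (N <= p)%nat /\ Rabs (u p - l) < / INR (S k)).
  { intros N k. assert (Hp : 0 < / INR (S k)) by (apply Rinv_0_lt_compat, lt_0_INR; lia).
    destruct (Hl (fun y => Rabs (y - l) < / INR (S k)) N) as [p [Hp1 Hp2]].
    - exists (mkposreal _ Hp). intros y Hy; exact Hy.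
    - exists p; auto. }
  set (g := fun N k => proj1_sig (constructive_indefinite_description _ (G N k))).
  assert (Hg : forall N k, (N <= g N k)%nat /\ Rabs (u (g N k) - l) < / INR (S k)).
  { intros N k. unfold g. destruct (constructive_indefinite_description _ (G N k)); auto. }
  set (f := fix f j := match j with 0%nat => g 0%nat 0%nat | S j' => g (S (f j')) (S j') end).
  exists f. split.
  - intro j. simpl. destruct (Hg (S (f j)) (S j)); lia.
  - exists l. intros eps He. destruct (archimed_cor1 eps He) as [J [HJ1 HJ2]].
    exists J. intros j Hj.
    assert (Rabs (u (f j) - l) < / INR (S j)).
    { destruct j; simpl; apply Hg. }
    eapply Rlt_le_trans; [exact H|]. eapply Rle_trans; [|left; exact HJ1].
    apply Rinv_le_contravar. apply lt_0_INR; lia. apply le_INR; lia.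
Qed.

Lemma Cmod_minus_le (x y : C) : Cmod (Cminus x y) <= Rabs (fst x - fst y) + Rabs (snd x - snd y).
Proof. destruct x, y. unfold Cminus, Cplus, Copp; simpl. apply Cmod_pair_le. Qed.

Lemma extract_C (u : nat -> C) M : (forall j, Cmod (u j) <= M) ->
  exists f, incr f /\ exists l, Ccv (fun j => u (f j)) l.
Proof.
  intros HM.
  destruct (extract_R (fun j => fst (u j)) M) as [f1 [If1 [l1 H1]]].
  { intro j; eapply Rle_trans; [apply fst_le_Cmod|auto]. }
  destruct (extract_R (fun j => snd (u (f1 j))) M) as [f2 [If2 [l2 H2]]].
  { intro j; eapply Rle_trans; [apply snd_le_Cmod|auto]. }
  exists (fun j => f1 (f2 j)). split; [apply incr_comp; auto|].
  exists (l1, l2). intros eps He.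
  assert (He2 : 0 < eps / 2) by lra.
  destruct (Rcv_sub _ _ f2 H1 (incr_ge f2 If2) _ He2) as [J1 HJ1].
  destruct (H2 _ He2) as [J2 HJ2].
  exists (Nat.max J1 J2). intros j Hj.
  eapply Rle_lt_trans; [apply Cmod_minus_le|]. simpl.
  specialize (HJ1 j ltac:(lia)). specialize (HJ2 j ltac:(lia)). simpl in *. lra.
Qed.

Lemma extract_fun M : exists E : (nat -> C) -> (nat -> nat) * C,
  forall u, (forall j, Cmod (u j) <= M) -> incr (fst (E u)) /\ Ccv (fun j => u (fst (E u) j)) (snd (E u)).
Proof.
  assert (H : forall u : nat -> C, exists x : (nat -> nat) * C,
     (forall j, Cmod (u j) <= M) -> incr (fst x) /\ Ccv (fun j => u (fst x j)) (snd x)).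
  { intro u. destruct (classic (forall j, Cmod (u j) <= M)) as [B|B].
    - destruct (extract_C u M B) as [f [If [l Hl]]]. exists (f, l); auto.
    - exists ((fun x => x), RtoC 0). intro; contradiction. }
  exists (fun u => proj1_sig (constructive_indefinite_description _ (H u))).
  intro u. destruct (constructive_indefinite_description _ (H u)); auto.
Qed.

Fixpoint Pre (E : (nat -> C) -> (nat -> nat) * C) (c : nat -> nat -> C) (k : nat) : nat -> nat :=
  match k with
  | 0%nat => fun x => x
  | S k' => fun x => Pre E c k' (fst (E (fun j => c (Pre E c k' j) k')) x)
  end.

Lemma diagonal (c : nat -> nat -> C) M : (forall j n, Cmod (c j n) <= M) ->
  exists f, incr f /\ exists alpha : nat -> C, forall n, Ccv (fun j => c (f j) n) (alpha n).
Proof.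
  intros HM. destruct (extract_fun M) as [E HE].
  set (th := fun k => fst (E (fun j => c (Pre E c k j) k))).
  assert (Ith : forall k, incr (th k)) by (intro k; apply (HE (fun j => c (Pre E c k j) k)); auto).
  assert (IPre : forall k, incr (Pre E c k)).
  { induction k; [intro j; simpl; lia|]. simpl. apply (incr_comp _ _ IHk (Ith k)). }
  set (f := fun j => Pre E c (S j) j).
  exists f. split.
  - intro j. unfold f. change (Pre E c (S (S j)) (S j)) with (Pre E c (S j) (th (S j) (S j))).
    apply incr_mono; auto. pose proof (incr_ge _ (Ith (S j)) (S j)). lia.
  - exists (fun k => snd (E (fun j => c (Pre E c k j) k))).
    intro k.
    assert (Hk := proj2 (HE (fun j => c (Pre E c k j) k) (fun j => HM _ _))).
    assert (Sub : forall m x, exists i, (x <= i)%nat /\ Pre E c (S k + m) x = Pre E c (S k) i).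
    { induction m; intro x.
      - exists x; split; auto. rewrite Nat.add_0_r; auto.
      - replace (S k + S m)%nat with (S (S k + m)) by lia.
        change (Pre E c (S (S k + m)) x) with (Pre E c (S k + m) (th (S k + m)%nat x)).
        destruct (IHm (th (S k + m)%nat x)) as [i [Hi1 Hi2]]. exists i. split; auto.
        pose proof (incr_ge _ (Ith (S k + m)%nat) x). lia. }
    intros eps He. destruct (Hk eps He) as [J HJ]. exists (Nat.max J k). intros j Hj.
    destruct (Sub (j - k)%nat j) as [i [Hi1 Hi2]].
    unfold f. replace (S j) with (S k + (j - k))%nat by lia. rewrite Hi2.
    change (Pre E c (S k) i) with (Pre E c k (th k i)).
    apply (HJ i). lia.
Qed.


Lemma rpow_cont p x0 eps : 1 <= p -> 0 <= x0 -> 0 < eps ->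
  exists del, 0 < del /\ forall x, 0 <= x -> Rabs (x - x0) < del -> Rabs (rpow x p - rpow x0 p) < eps.
Proof.
  intros Hp [Hx0|Hx0] He.
  - assert (D : derivable_pt (fun x => Rpower x p) x0) by (exists (p * Rpower x0 (p - 1)); apply derivable_pt_lim_power; auto).
    pose proof (derivable_continuous_pt _ _ D) as Cc.
    destruct (Cc eps He) as [alp [Ha Hal]].
    exists (Rmin alp x0). split; [apply Rmin_glb_lt; auto|].
    intros x Hx Hd. assert (Hxp : 0 < x).
    { assert (Rabs (x - x0) < x0) by (eapply Rlt_le_trans; [exact Hd|apply Rmin_r]).
      apply Rabs_def2 in H. lra. }
    rewrite !rpow_pos_eq by auto.
    destruct (Req_dec x x0) as [E|E]. { subst. rewrite Rminus_diag, Rabs_R0; auto. }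
    apply (Hal x). split. split; [exact I| auto].
    simpl. unfold Rdist. eapply Rlt_le_trans; [exact Hd|apply Rmin_l].
  - subst x0. exists (Rmin 1 eps). split; [apply Rmin_glb_lt; lra|].
    intros x Hx Hd. rewrite rpow_0. rewrite Rminus_0_r in *. rewrite Rabs_pos_eq in * by (auto; apply rpow_ge0).
    assert (x < 1) by (eapply Rlt_le_trans; [exact Hd|apply Rmin_l]).
    assert (x < eps) by (eapply Rlt_le_trans; [exact Hd|apply Rmin_r]).
    pose proof (rpow_le1 x p (conj Hx (Rlt_le _ _ H)) Hp). lra.
Qed.

Lemma Cmod_rev (x y : C) : Rabs (Cmod x - Cmod y) <= Cmod (Cminus x y).
Proof.
  assert (E1 : x = Cplus (Cminus x y) y) by (destruct x, y; unfold Cminus, Cplus, Copp; simpl; f_equal; ring).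
  assert (E2 : y = Cplus (Copp (Cminus x y)) x) by (destruct x, y; unfold Cminus, Cplus, Copp; simpl; f_equal; ring).
  pose proof (Cmod_triangle (Cminus x y) y). rewrite <- E1 in H.
  pose proof (Cmod_triangle (Copp (Cminus x y)) x). rewrite <- E2 in H0.
  change (Copp (Cminus x y)) with (- (Cminus x y))%C in H0. rewrite Cmod_opp in H0.
  apply Rabs_le; lra.
Qed.

Lemma fatou p (c : nat -> nat -> C) (alpha : nat -> C) B : 1 <= p ->
  (forall n, Ccv (fun j => c j n) (alpha n)) ->
  (forall j, in_lp p (c j) /\ Series (fun n => rpow (Cmod (c j n)) p) <= B) ->
  in_lp p alpha /\ Series (fun n => rpow (Cmod (alpha n)) p) <= B.
Proof.
  intros Hp Hcv Hc. apply ser_bound; [intro; apply rpow_ge0|].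
  intro N. apply Rnot_lt_le. intro Hlt.
  set (s := sum_n (fun n => rpow (Cmod (alpha n)) p) N) in *.
  set (eta := (s - B) / (2 * INR (S N))).
  assert (HN : 0 < INR (S N)) by (apply lt_0_INR; lia).
  assert (Heta : 0 < eta) by (unfold eta; apply Rdiv_lt_0_compat; lra).
  destruct (ev_finite (fun n j => Rabs (rpow (Cmod (c j n)) p - rpow (Cmod (alpha n)) p) < eta) N) as [J HJ].
  { intros n Hn. destruct (rpow_cont p (Cmod (alpha n)) eta Hp (Cmod_ge_0 _) Heta) as [del [Hd Hdel]].
    destruct (Hcv n del Hd) as [J HJ]. exists J. intros j Hj. apply Hdel. apply Cmod_ge_0.
    eapply Rle_lt_trans; [apply Cmod_rev|]. apply HJ; auto. }
  destruct (Hc J) as [HcJ HBJ].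
  assert (sum_n (fun n => rpow (Cmod (alpha n)) p + - eta) N <= sum_n (fun n => rpow (Cmod (c J n)) p) N).
  { apply sum_n_mono. intros n Hn. specialize (HJ J (le_n _) n Hn). apply Rabs_def2 in HJ. lra. }
  rewrite sum_n_plus_R, sum_n_const_R in H. fold s in H.
  pose proof (psum_le_series (fun n => rpow (Cmod (c J n)) p) N (fun _ => rpow_ge0 _ _) HcJ).
  assert (INR (S N) * eta = (s - B) / 2) by (unfold eta; field; lra).
  lra.
Qed.

Lemma lp_sub p a b : 0 < p -> in_lp p a -> in_lp p b ->
  in_lp p (seq_sub a b) /\
  Series (fun n => rpow (Cmod (seq_sub a b n)) p) <=
    rpow 2 p * (Series (fun n => rpow (Cmod (a n)) p) + Series (fun n => rpow (Cmod (b n)) p)).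
Proof.
  intros Hp Ha Hb.
  assert (Ev : ex_series (fun n => rpow 2 p * (rpow (Cmod (a n)) p + rpow (Cmod (b n)) p))).
  { apply ex_series_scal. apply ex_series_plus_R; auto. }
  assert (Hpt : forall n, 0 <= rpow (Cmod (seq_sub a b n)) p <= rpow 2 p * (rpow (Cmod (a n)) p + rpow (Cmod (b n)) p)).
  { intro n. split; [apply rpow_ge0|].
    assert (Cmod (seq_sub a b n) <= 2 * Rmax (Cmod (a n)) (Cmod (b n))).
    { unfold seq_sub, Cminus. eapply Rle_trans; [apply Cmod_triangle|]. rewrite Cmod_opp.
      pose proof (Rmax_l (Cmod (a n)) (Cmod (b n))). pose proof (Rmax_r (Cmod (a n)) (Cmod (b n))). lra. }
    assert (H1 : rpow (Cmod (seq_sub a b n)) p <= rpow (2 * Rmax (Cmod (a n)) (Cmod (b n))) p).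
    { apply rpow_mono; auto. split; [apply Cmod_ge_0|exact H]. }
    eapply Rle_trans; [exact H1|].
    rewrite rpow_mult by (first [lra | eapply Rle_trans; [apply Cmod_ge_0|apply Rmax_l]]).
    apply Rmult_le_compat_l; [apply rpow_ge0|].
    pose proof (rpow_ge0 (Cmod (a n)) p). pose proof (rpow_ge0 (Cmod (b n)) p).
    unfold Rmax; destruct (Rle_dec (Cmod (a n)) (Cmod (b n))); lra. }
  destruct (ser_dom _ _ Hpt Ev) as [E1 E2]. split; auto.
  rewrite Series_scal_l, Series_plus in E2 by auto. auto.
Qed.

Lemma compact_gen p q (T : seqC -> seqC) : 1 <= p ->
  (forall a, in_lp p a -> in_lp q (T a)) ->
  (forall a b, in_lp p a -> in_lp p b -> T (seq_sub a b) = seq_sub (T a) (T b)) ->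
  (forall B eps, 0 < eps -> exists N del, 0 < del /\ forall d, in_lp p d ->
       Series (fun n => rpow (Cmod (d n)) p) <= B -> (forall n, (n <= N)%nat -> Cmod (d n) <= del) ->
       lp_norm q (T d) <= eps) ->
  compact_op p q T.
Proof.
  intros Hp HT Hlin Hsmall a M Ha.
  assert (Hp0 : 0 < p) by lra.
  destruct (diagonal (fun j n => a j n) M) as [f [If [alpha Hal]]].
  { intros j n. destruct (Ha j) as [A1 A2]. eapply Rle_trans; [apply coord_le_norm; eauto|auto]. }
  destruct (fatou p (fun j n => a (f j) n) alpha (rpow M p)) as [Fa Fb]; auto.
  { intro j. destruct (Ha (f j)); split; auto. apply lp_series_le; auto. }
  exists f, (T alpha). split; [exact If|]. split; [apply HT; auto|].
  apply is_lim_seq_Reals. intros eps He.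
  set (Bd := rpow 2 p * (rpow M p + rpow M p)).
  destruct (Hsmall Bd (eps/2) ltac:(lra)) as [N [del [Hdel Hsm]]].
  destruct (ev_finite (fun n j => Cmod (seq_sub (a (f j)) alpha n) <= del) N) as [J HJ].
  { intros n Hn. destruct (Hal n del Hdel) as [J HJ]. exists J. intros j Hj. left. apply HJ; auto. }
  exists J. intros j Hj. unfold Rdist. rewrite Rminus_0_r.
  destruct (Ha (f j)) as [Haj HMj].
  rewrite <- Hlin by auto. rewrite Rabs_pos_eq by apply lp_norm_ge0.
  destruct (lp_sub p (a (f j)) alpha Hp0 Haj Fa) as [S1 S2].
  eapply Rle_lt_trans; [apply Hsm; auto|lra].
  - eapply Rle_trans; [exact S2|]. unfold Bd. apply Rmult_le_compat_l; [apply rpow_ge0|].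
    pose proof (lp_series_le p (a (f j)) M Hp0 Haj HMj). lra.
Qed.


Lemma is_series_zero : is_series (fun _ : nat => 0) 0.
Proof.
  apply is_series_lim. apply is_lim_seq_ext with (fun _ => 0). intro N; rewrite sum_n_const_R; lra.
  apply is_lim_seq_const.
Qed.

Lemma lp_small q x eta : 0 < q -> 0 <= eta -> Series (fun n => rpow (Cmod (x n)) q) <= rpow eta q -> lp_norm q x <= eta.
Proof.
  intros Hq He H. unfold lp_norm. set (s := Series _) in *.
  destruct (Rle_lt_dec s 0). rewrite rpow_le0; auto.
  rewrite <- (rpow_inv eta q) by (auto; lra). apply rpow_mono. apply Rinv_0_lt_compat; auto. lra.
Qed.

Lemma is_series_keep_fun (y : nat -> nat -> R) (Sm : nat -> R) N :
  (forall n, is_series (y n) (Sm n)) -> forall n, is_series (ylo N y n) (keep N Sm n).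
Proof.
  intros HS n. unfold ylo, keep. destruct (Nat.leb n N).
  - apply HS.
  - apply is_series_zero.
Qed.

Lemma is_series_mask_fun (y : nat -> nat -> R) (Sm : nat -> R) N :
  (forall n, is_series (y n) (Sm n)) -> forall n, is_series (yhi N y n) (mask N Sm n).
Proof.
  intros HS n. unfold yhi, mask. destruct (Nat.leb n N).
  - apply is_series_zero.
  - apply HS.
Qed.

Lemma ylo_ge0 y N : (forall n k, 0 <= y n k) -> forall n k, 0 <= ylo N y n k.
Proof. intros H n k; unfold ylo; destruct (Nat.leb n N); auto; lra. Qed.
Lemma yhi_ge0 y N : (forall n k, 0 <= y n k) -> forall n k, 0 <= yhi N y n k.
Proof. intros H n k; unfold yhi; destruct (Nat.leb n N); auto; lra. Qed.

Lemma keep_rpow_ex (Sm : nat -> R) e N : 0 < e -> ex_series (fun n => rpow (Sm n) e) -> ex_series (fun n => rpow (keep N Sm n) e).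
Proof.
  intros He H. apply ex_series_cmp with (fun n => rpow (Sm n) e); auto. intro n; split; [apply rpow_ge0|].
  unfold keep; destruct (Nat.leb n N). lra. rewrite rpow_0; apply rpow_ge0.
Qed.
Lemma mask_rpow_ex (Sm : nat -> R) e N : 0 < e -> ex_series (fun n => rpow (Sm n) e) -> ex_series (fun n => rpow (mask N Sm n) e).
Proof.
  intros He H. apply ex_series_cmp with (fun n => rpow (Sm n) e); auto. intro n; split; [apply rpow_ge0|].
  unfold mask; destruct (Nat.leb n N). rewrite rpow_0; apply rpow_ge0. lra.
Qed.

Definition ev (k : nat) : seqC := fun m => if Nat.eqb m k then RtoC 1 else RtoC 0.

Lemma sum_ind_R k N : sum_n (fun m => if Nat.eqb m k then 1 else 0) N = if Nat.leb k N then 1 else 0.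
Proof.
  induction N.
  - rewrite sum_O_R. destruct k; simpl; auto.
  - rewrite sum_Sn_R, IHN. destruct (Nat.eqb (S N) k) eqn:E1.
    + apply Nat.eqb_eq in E1. subst. replace (Nat.leb (S N) N) with false by (symmetry; apply Nat.leb_gt; lia).
      rewrite Nat.leb_refl. lra.
    + apply Nat.eqb_neq in E1. destruct (Nat.leb k N) eqn:E2.
      * apply Nat.leb_le in E2. replace (Nat.leb k (S N)) with true by (symmetry; apply Nat.leb_le; lia). lra.
      * apply Nat.leb_gt in E2. replace (Nat.leb k (S N)) with false by (symmetry; apply Nat.leb_gt; lia). lra.
Qed.

Lemma ev_facts k : in_lp 1 (ev k) /\ lp_norm 1 (ev k) <= 1.
Proof.
  assert (Hc : forall m, Cmod (ev k m) = if Nat.eqb m k then 1 else 0).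
  { intro m; unfold ev; destruct (Nat.eqb m k); [apply Cmod_1| apply Cmod_0]. }
  destruct (ser_bound (fun m => Cmod (ev k m)) 1) as [E1 E2].
  - intro; apply Cmod_ge_0.
  - intro N. rewrite (sum_n_ext _ _ N Hc), sum_ind_R. destruct (Nat.leb k N); lra.
  - assert (in_lp 1 (ev k)) by (apply in_lp1_iff; auto). split; auto. rewrite lp1_eq; auto.
Qed.

Lemma sum_n_C_fst (z : nat -> C) N : fst (sum_n z N) = sum_n (fun n => fst (z n)) N.
Proof. induction N; [rewrite sum_O, sum_O_R; auto| rewrite sum_Sn, sum_Sn_R, <- IHN; reflexivity]. Qed.
Lemma sum_n_C_snd (z : nat -> C) N : snd (sum_n z N) = sum_n (fun n => snd (z n)) N.
Proof. induction N; [rewrite sum_O, sum_O_R; auto| rewrite sum_Sn, sum_Sn_R, <- IHN; reflexivity]. Qed.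

Lemma sum_ev (z : nat -> C) k N : sum_n (fun n => Cmult (z n) (ev n k)) N = if Nat.leb k N then z k else RtoC 0.
Proof.
  assert (H1 : forall n, fst (Cmult (z n) (ev n k)) = fst (z k) * (if Nat.eqb n k then 1 else 0)).
  { intro n. unfold ev. rewrite Nat.eqb_sym. destruct (Nat.eqb n k) eqn:E; [apply Nat.eqb_eq in E; subst|]; simpl; ring. }
  assert (H2 : forall n, snd (Cmult (z n) (ev n k)) = snd (z k) * (if Nat.eqb n k then 1 else 0)).
  { intro n. unfold ev. rewrite Nat.eqb_sym. destruct (Nat.eqb n k) eqn:E; [apply Nat.eqb_eq in E; subst|]; simpl; ring. }
  apply injective_projections.
  - rewrite sum_n_C_fst, (sum_n_ext _ _ N H1), sum_n_scal_R, sum_ind_R.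
    destruct (Nat.leb k N); simpl; lra.
  - rewrite sum_n_C_snd, (sum_n_ext _ _ N H2), sum_n_scal_R, sum_ind_R.
    destruct (Nat.leb k N); simpl; lra.
Qed.

Lemma Cmod_sq_split (z : C) a b : 0 <= a -> 0 <= b -> Cmod z <= a + b -> rpow (Cmod z) 2 <= 2 * rpow a 2 + 2 * rpow b 2.
Proof.
  intros Ha Hb H. pose proof (Cmod_ge_0 z). rewrite (rpow_2 (Cmod z)), (rpow_2 a), (rpow_2 b) by auto. assert (Cmod z * Cmod z <= (a+b)*(a+b)) by (apply Rmult_le_compat; lra). pose proof (Rle_0_sqr (a-b)). unfold Rsqr in *. nra.
Qed.


Lemma rpow_inv_le q s eta : 0 < q -> 0 <= eta -> s <= rpow eta q -> rpow s (/q) <= eta.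
Proof.
  intros Hq He H. destruct (Rle_lt_dec s 0). rewrite rpow_le0; auto.
  rewrite <- (rpow_inv eta q) by (auto; lra). apply rpow_mono. apply Rinv_0_lt_compat; auto. lra.
Qed.

Lemma Cminus_self (z : C) : Cminus z z = RtoC 0.
Proof. destruct z; unfold Cminus, Cplus, Copp, RtoC; simpl; f_equal; ring. Qed.
Lemma Cminus_zero (z : C) : Cminus z (RtoC 0) = z.
Proof. destruct z; unfold Cminus, Cplus, Copp, RtoC; simpl; f_equal; ring. Qed.

Lemma mask_rpow (Sm : nat -> R) e N n : rpow (mask N Sm n) e = mask N (fun n => rpow (Sm n) e) n.
Proof. unfold mask; destruct (Nat.leb n N); auto. apply rpow_0. Qed.

Lemma lin_ker1 p y (Sm : nat -> R) : 1 < p -> (forall n k, 0 <= y n k) -> (forall n, is_series (y n) (Sm n)) ->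
  ex_series (fun n => rpow (Sm n) (conj_exp p)) ->
  forall a b, in_lp p a -> in_lp p b -> KerOp y (seq_sub a b) = seq_sub (KerOp y a) (KerOp y b).
Proof.
  intros Hp H0 HS HSe a b Ha Hb. apply functional_extensionality; intro k.
  apply ker_sub; auto. apply (L1_facts p y Sm); auto. apply (L1_facts p y Sm); auto.
Qed.

Theorem case1 p (y : nat -> nat -> R) (Sm : nat -> R) : 1 < p ->
  (forall n k, 0 <= y n k) -> (forall n, is_series (y n) (Sm n)) ->
  ex_series (fun n => rpow (Sm n) (conj_exp p)) ->
  ex_series (fun k => Lp (conj_exp p) (fun n => y n k)) ->
  (forall a, in_lp p a -> in_lp 1 (KerOp y a)) /\ compact_op p 1 (KerOp y) /\ nuclear p 1 (KerOp y).
Proof.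
  intros Hp H0 HS HSe Hrow.
  set (e := conj_exp p) in *.
  assert (He : 1 < e) by (apply conj_exp_gt1; auto).
  pose proof (L1_facts p y Sm Hp H0 HS HSe) as L1.
  assert (S0 : forall n, 0 <= Sm n) by (intro n; eapply Rle_trans; [apply (H0 n 0%nat)|apply row_le; auto]).
  split; [intros a Ha; apply L1; auto|].
  split.
  - apply compact_gen; [lra| intros a Ha; apply L1; auto | apply (lin_ker1 p y Sm); auto |].
    intros B eps Heps.
    set (Bp := Rabs B + 1).
    assert (HBp : B <= Bp) by (unfold Bp; pose proof (Rle_abs B); lra).
    assert (HBp0 : 0 < Bp) by (unfold Bp; pose proof (Rabs_pos B); lra).
    set (C1 := 4 * rpow Bp (/p) + 1).
    assert (HC1 : 0 < C1) by (unfold C1; pose proof (rpow_ge0 Bp (/p)); lra).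
    set (eta := eps / (2 * C1)).
    assert (Heta : 0 < eta) by (unfold eta; apply Rdiv_lt_0_compat; lra).
    pose proof (tail_lim0 _ HSe) as TL. apply is_lim_seq_Reals in TL.
    destruct (TL (rpow eta e) (rpow_gt0 _ _ Heta)) as [N HN].
    specialize (HN N (le_n _)). unfold Rdist in HN. rewrite Rminus_0_r in HN.
    assert (LN : Lp e (mask N Sm) <= eta).
    { unfold Lp. apply rpow_inv_le; [lra|lra|].
      rewrite (Series_ext _ (mask N (fun n => rpow (Sm n) e))) by (intro; apply mask_rpow).
      pose proof (Rle_abs (Series (mask N (fun n => rpow (Sm n) e)))). lra. }
    set (SN := sum_n Sm N).
    assert (HSN : 0 <= SN) by (apply sum_n_nonneg; auto).
    set (del := eps / (4 * (SN + 1))).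
    exists N, del. split; [unfold del; apply Rdiv_lt_0_compat; lra|].
    intros d Hd HdB Hdd.
    destruct (L1 d Hd) as [Ek [_ [Tin _]]].
    destruct (L1_facts p (ylo N y) (keep N Sm) Hp (ylo_ge0 y N H0) (is_series_keep_fun y Sm N HS)
                (keep_rpow_ex Sm e N ltac:(lra) HSe) d Hd) as [Eklo [_ [Tlo Blo]]].
    destruct (L1_facts p (yhi N y) (mask N Sm) Hp (yhi_ge0 y N H0) (is_series_mask_fun y Sm N HS)
                (mask_rpow_ex Sm e N ltac:(lra) HSe) d Hd) as [Ekhi [_ [Thi Bhi]]].
    apply in_lp1_iff in Tin. apply in_lp1_iff in Tlo. apply in_lp1_iff in Thi.
    apply lp_small; [lra|lra|]. rewrite rpow_1 by lra.
    rewrite (Series_ext _ (fun k => Cmod (KerOp y d k))) by (intro; apply rpow_1, Cmod_ge_0).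
    assert (Hsplit : Series (fun k => Cmod (KerOp y d k)) <=
       Series (fun k => Cmod (KerOp (ylo N y) d k)) + Series (fun k => Cmod (KerOp (yhi N y) d k))).
    { rewrite <- Series_plus by auto. apply Series_le; [|apply ex_series_plus_R; auto].
      intro k. split; [apply Cmod_ge_0|]. rewrite (ker_split y N d k); auto. apply Cmod_triangle. }
    assert (Hlo : Series (fun n => Cmod (d n) * keep N Sm n) <= del * SN).
    { unfold SN. rewrite <- sum_n_scal_R.
      rewrite <- (is_series_unique _ _ (is_series_keep (fun n => del * Sm n) N)).
      apply Series_le; [| eexists; apply is_series_keep].
      intro n. unfold keep. destruct (Nat.leb n N) eqn:E.
      - apply Nat.leb_le in E. specialize (Hdd n E). pose proof (Cmod_ge_0 (d n)). split.
        apply Rmult_le_pos; auto. apply Rmult_le_compat_r; auto.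
      - rewrite Rmult_0_r; lra. }
    assert (Hhi : Series (fun n => Cmod (d n) * mask N Sm n) <= 2 * rpow Bp (/p) * eta).
    { destruct (holder p (fun n => Cmod (d n)) (mask N Sm) Hp (fun n => Cmod_ge_0 _)
         (fun n => ltac:(unfold mask; destruct (Nat.leb n N); [lra|auto])) Hd
         (mask_rpow_ex Sm e N ltac:(lra) HSe)) as [_ HH].
      fold e in HH. eapply Rle_trans; [exact HH|].
      assert (Lp p (fun n => Cmod (d n)) <= rpow Bp (/p)).
      { unfold Lp. apply rpow_mono. apply Rinv_0_lt_compat; lra. split; [|lra].
        apply Series_ge0; auto. intro; apply rpow_ge0. }
      pose proof (Lp_ge0 p (fun n => Cmod (d n))). pose proof (Lp_ge0 e (mask N Sm)).
      apply Rmult_le_compat; try lra. }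
    assert (del * SN <= eps / 4).
    { unfold del. replace (eps / (4 * (SN + 1)) * SN) with (eps / 4 - eps / (4 * (SN + 1))) by (field; lra).
      assert (0 < eps / (4 * (SN + 1))) by (apply Rdiv_lt_0_compat; lra). lra. }
    assert (2 * rpow Bp (/p) * eta <= eps / 4).
    { unfold eta. apply Rmult_le_reg_r with (2 * C1); [lra|].
      replace (2 * rpow Bp (/p) * (eps / (2 * C1)) * (2 * C1)) with (2 * rpow Bp (/p) * eps) by (field; lra).
      unfold C1. pose proof (rpow_ge0 Bp (/p)). nra. }
    lra.
  - exists (fun k a => KerOp y a k), (fun k => 4 * Lp e (fun n => y n k)), ev.
    assert (Erow : forall k, ex_series (fun n => rpow (y n k) e)).
    { intro k. apply ex_series_cmp with (fun n => rpow (Sm n) e); auto. intro n; split. apply rpow_ge0.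
      apply rpow_mono. lra. split; auto. apply row_le; auto. }
    split; [|split; [|split]].
    + intro k. split; [pose proof (Lp_ge0 e (fun n => y n k)); lra|].
      split; [intros a b Ha Hb; apply ker_add; auto; apply L1; auto|].
      split; [intros z a Ha; apply ker_scal; auto; apply L1; auto|].
      intros a Ha. destruct (ker_abs y a k (fun n => H0 n k) (proj1 (L1 a Ha) k)) as [_ [_ B]].
      destruct (holder p (fun n => Cmod (a n)) (fun n => y n k) Hp (fun n => Cmod_ge_0 _) (fun n => H0 n k) Ha (Erow k)) as [_ HH].
      rewrite (Series_ext (fun n => y n k * Cmod (a n)) (fun n => Cmod (a n) * y n k)) in B by (intro; ring).
      rewrite lp_norm_Lp. fold e in HH. lra.
    + intro n; apply ev_facts.
    + apply ex_series_cmp with (fun k => 4 * Lp e (fun n => y n k)); [|apply ex_series_scal; auto].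
      intro k. destruct (ev_facts k) as [_ Hk]. pose proof (lp_norm_ge0 1 (ev k)).
      pose proof (Lp_ge0 e (fun n => y n k)). split. apply Rmult_le_pos; lra.
      rewrite <- (Rmult_1_r (4 * Lp e (fun n => y n k))) at 2. apply Rmult_le_compat_l; lra.
    + intros a Ha. destruct (L1 a Ha) as [_ [_ [Tin _]]]. apply in_lp1_iff in Tin.
      apply is_lim_seq_ext with (fun N => Series (mask N (fun k => Cmod (KerOp y a k)))); [|apply tail_lim0; auto].
      intro N.
      assert (Ep : forall k, Cmod (seq_sub (KerOp y a) (fun k => sum_n (fun n => Cmult (KerOp y a n) (ev n k)) N) k)
                  = mask N (fun k => Cmod (KerOp y a k)) k).
      { intro k. unfold seq_sub. rewrite sum_ev. unfold mask. destruct (Nat.leb k N).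
        rewrite Cminus_self; apply Cmod_0. rewrite Cminus_zero; auto. }
      rewrite lp1_eq.
      * symmetry; apply Series_ext; auto.
      * apply in_lp1_iff. eapply ex_series_ext; [|apply ex_series_mask; exact Tin]. intro k; rewrite Ep; auto.
Qed.


Lemma is_series_keep_sq (y : nat -> nat -> R) (V : nat -> R) N :
  (forall n, is_series (fun k => rpow (y n k) 2) (V n)) -> forall n, is_series (fun k => rpow (ylo N y n k) 2) (keep N V n).
Proof.
  intros HS n. unfold ylo, keep. destruct (Nat.leb n N).
  - apply HS.
  - eapply is_series_ext; [|apply is_series_zero]. intro; rewrite rpow_0; auto.
Qed.

Lemma is_series_mask_sq (y : nat -> nat -> R) (V : nat -> R) N :
  (forall n, is_series (fun k => rpow (y n k) 2) (V n)) -> forall n, is_series (fun k => rpow (yhi N y n k) 2) (mask N V n).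
Proof.
  intros HS n. unfold yhi, mask. destruct (Nat.leb n N).
  - eapply is_series_ext; [|apply is_series_zero]. intro; rewrite rpow_0; auto.
  - apply HS.
Qed.

Lemma keep_ex (V : nat -> R) N : ex_series (keep N V).
Proof. eexists; apply is_series_keep. Qed.

Theorem case2 (y : nat -> nat -> R) (V : nat -> R) :
  (forall n k, 0 <= y n k) -> (forall n, is_series (fun k => rpow (y n k) 2) (V n)) -> ex_series V ->
  (forall a, in_lp 2 a -> in_lp 2 (KerOp y a)) /\ compact_op 2 2 (KerOp y) /\
  (ex_series (fun n => rpow (V n) (/2)) -> nuclear 2 2 (KerOp y)).
Proof.
  intros H0 HV EV.
  pose proof (L2_facts y V H0 HV EV) as L2.
  assert (V0 : forall n, 0 <= V n).
  { intro n. rewrite <- (is_series_unique _ _ (HV n)). apply Series_ge0. intro; apply rpow_ge0. exists (V n); auto. }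
  split; [intros a Ha; apply L2; auto|].
  split.
  - apply compact_gen; [lra| intros a Ha; apply L2; auto | |].
    { intros a b Ha Hb. apply functional_extensionality; intro k. apply ker_sub; auto. apply L2; auto. apply L2; auto. }
    intros B eps Heps.
    set (Bp := Rabs B + 1).
    assert (HBp : B <= Bp) by (unfold Bp; pose proof (Rle_abs B); lra).
    assert (HBp0 : 0 < Bp) by (unfold Bp; pose proof (Rabs_pos B); lra).
    set (T2 := rpow eps 2).
    assert (HT2 : 0 < T2) by (apply rpow_gt0; auto).
    pose proof (tail_lim0 _ EV) as TL. apply is_lim_seq_Reals in TL.
    destruct (TL (T2 / (64 * Bp)) ltac:(apply Rdiv_lt_0_compat; lra)) as [N HN].
    specialize (HN N (le_n _)). unfold Rdist in HN. rewrite Rminus_0_r in HN.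
    pose proof (Rle_abs (Series (mask N V))) as HN'.
    set (SN := sum_n V N).
    assert (HSN : 0 <= SN) by (apply sum_n_nonneg; auto).
    assert (HSN1 : 0 < INR (S N)) by (apply lt_0_INR; lia).
    set (dd := T2 / (64 * INR (S N) * (SN + 1))).
    assert (Hdd : 0 < dd) by (unfold dd; apply Rdiv_lt_0_compat; [lra|]; apply Rmult_lt_0_compat; lra).
    set (del := rpow dd (/2)).
    assert (Hdel2 : rpow del 2 = dd) by (unfold del; apply rpow_inv'; lra).
    exists N, del. split; [apply rpow_gt0; auto|].
    intros d Hd HdB Hdel.
    set (dk := fun n => if Nat.leb n N then d n else RtoC 0).
    assert (Pdk : forall n, 0 <= rpow (Cmod (dk n)) 2 <= keep N (fun _ => rpow del 2) n).
    { intro n. split; [apply rpow_ge0|]. unfold dk, keep. destruct (Nat.leb n N) eqn:E.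
      - apply Nat.leb_le in E. apply rpow_mono; [lra|]. split; [apply Cmod_ge_0|auto].
      - rewrite Cmod_0, rpow_0; lra. }
    destruct (ser_dom _ _ Pdk (keep_ex _ N)) as [Edk Sdk].
    rewrite (is_series_unique _ _ (is_series_keep (fun _ => rpow del 2) N)), sum_n_const_R in Sdk.
    destruct (L2_facts (ylo N y) (keep N V) (ylo_ge0 y N H0) (is_series_keep_sq y V N HV) (keep_ex V N) dk Edk)
      as [Eklo [Tlo Blo]].
    destruct (L2_facts (yhi N y) (mask N V) (yhi_ge0 y N H0) (is_series_mask_sq y V N HV) (ex_series_mask V N EV) d Hd)
      as [Ekhi [Thi Bhi]].
    destruct (L2 d Hd) as [Ek [Tin _]].
    assert (Elo : forall k, KerOp (ylo N y) d k = KerOp (ylo N y) dk k).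
    { intro k. unfold KerOp. f_equal; apply Series_ext; intro n; unfold ylo, dk; destruct (Nat.leb n N); ring. }
    apply lp_small; [lra|lra|].
    assert (Hpt : forall k, 0 <= rpow (Cmod (KerOp y d k)) 2 <=
        2 * rpow (Cmod (KerOp (ylo N y) dk k)) 2 + 2 * rpow (Cmod (KerOp (yhi N y) d k)) 2).
    { intro k. split; [apply rpow_ge0|]. apply Cmod_sq_split; try apply Cmod_ge_0.
      rewrite (ker_split y N d k), <- Elo; auto. apply Cmod_triangle. }
    assert (Ex2 : ex_series (fun k => 2 * rpow (Cmod (KerOp (ylo N y) dk k)) 2 + 2 * rpow (Cmod (KerOp (yhi N y) d k)) 2)).
    { apply ex_series_plus_R; apply ex_series_scal; auto. }
    destruct (ser_dom _ _ Hpt Ex2) as [_ SS]. eapply Rle_trans; [exact SS|].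
    rewrite Series_plus, !Series_scal_l by (apply ex_series_scal; auto).
    fold T2.
    rewrite (is_series_unique _ _ (is_series_keep V N)) in Blo. fold SN in Blo.
    assert (A1 : 16 * Series (fun n => rpow (Cmod (dk n)) 2) * SN <= 16 * (INR (S N) * dd) * SN).
    { rewrite Hdel2 in Sdk. apply Rmult_le_compat_r; auto. lra. }
    assert (A2 : 16 * (INR (S N) * dd) * SN <= T2 / 4).
    { unfold dd. replace (16 * (INR (S N) * (T2 / (64 * INR (S N) * (SN + 1)))) * SN)
        with (T2 / 4 - T2 / (4 * (SN + 1))) by (field; lra).
      assert (0 < T2 / (4 * (SN + 1))) by (apply Rdiv_lt_0_compat; lra). lra. }
    assert (A3 : 16 * Series (fun n => rpow (Cmod (d n)) 2) * Series (mask N V) <= 16 * Bp * Series (mask N V)).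
    { apply Rmult_le_compat_r. apply Series_ge0. intro n; unfold mask; destruct (Nat.leb n N); auto; lra.
      apply ex_series_mask; auto. lra. }
    assert (A4 : 16 * Bp * Series (mask N V) <= T2 / 4).
    { assert (Series (mask N V) <= T2 / (64 * Bp)) by lra.
      apply Rmult_le_compat_l with (r := 16 * Bp) in H; [|lra].
      replace (16 * Bp * (T2 / (64 * Bp))) with (T2 / 4) in H by (field; lra). lra. }
    lra.
  - intros HVs. exists (fun n a => a n), (fun _ => 1), (fun n k => RtoC (y n k)).
    assert (Hyv : forall n k, rpow (Cmod (RtoC (y n k))) 2 = rpow (y n k) 2) by (intros; rewrite Cmod_RtoC_nonneg; auto).
    split; [|split; [|split]].
    + intro n. split; [lra|]. split; [reflexivity|]. split; [reflexivity|].
      intros a Ha. rewrite Rmult_1_l. apply coord_le_norm; auto; lra.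
    + intro n. unfold in_lp. eapply ex_series_ext; [|exists (V n); apply HV]. intro k; simpl; rewrite Hyv; auto.
    + eapply ex_series_ext; [|exact HVs]. intro n. rewrite Rmult_1_l. unfold lp_norm. f_equal.
      rewrite (Series_ext _ (fun k => rpow (y n k) 2)) by (intro; apply Hyv).
      symmetry; apply is_series_unique; auto.
    + intros a Ha. destruct (L2 a Ha) as [Ek _].
      assert (Eq : forall N, seq_sub (KerOp y a) (fun k => sum_n (fun n => Cmult (a n) (RtoC (y n k))) N)
                      = KerOp (yhi N y) a).
      { intro N. apply functional_extensionality; intro k.
        destruct (ker_abs y a k (fun n => H0 n k) (Ek k)) as [E1 [E2 _]].
        assert (F1 : forall n, fst (Cmult (a n) (RtoC (y n k))) = y n k * fst (a n)) by (intro; simpl; ring).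
        assert (F2 : forall n, snd (Cmult (a n) (RtoC (y n k))) = y n k * snd (a n)) by (intro; simpl; ring).
        unfold seq_sub. apply injective_projections.
        - transitivity (fst (KerOp y a k) - fst (sum_n (fun n => Cmult (a n) (RtoC (y n k))) N)); [reflexivity|].
          rewrite sum_n_C_fst, (sum_n_ext _ _ N F1). unfold KerOp; cbn [fst].
          rewrite <- Series_mask by auto. apply Series_ext; intro n; unfold mask, yhi; destruct (Nat.leb n N); ring.
        - transitivity (snd (KerOp y a k) - snd (sum_n (fun n => Cmult (a n) (RtoC (y n k))) N)); [reflexivity|].
          rewrite sum_n_C_snd, (sum_n_ext _ _ N F2). unfold KerOp; cbn [snd].
          rewrite <- Series_mask by auto. apply Series_ext; intro n; unfold mask, yhi; destruct (Nat.leb n N); ring. }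
      apply is_lim_seq_Reals. intros eps Heps.
      set (A := Series (fun n => rpow (Cmod (a n)) 2)).
      assert (A0 : 0 <= A) by (apply Series_ge0; auto; intro; apply rpow_ge0).
      set (T2 := rpow (eps/2) 2).
      assert (HT2 : 0 < T2) by (apply rpow_gt0; lra).
      pose proof (tail_lim0 _ EV) as TL. apply is_lim_seq_Reals in TL.
      destruct (TL (T2 / (16 * (A + 1))) ltac:(apply Rdiv_lt_0_compat; lra)) as [N0 HN0].
      exists N0. intros N HN. specialize (HN0 N HN). unfold Rdist in *. rewrite Rminus_0_r in *.
      rewrite Eq. rewrite Rabs_pos_eq by apply lp_norm_ge0.
      apply Rle_lt_trans with (eps/2); [|lra].
      destruct (L2_facts (yhi N y) (mask N V) (yhi_ge0 y N H0) (is_series_mask_sq y V N HV) (ex_series_mask V N EV) a Ha)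
        as [_ [_ Bhi]].
      apply lp_small; [lra|lra|]. fold A in Bhi. fold T2. eapply Rle_trans; [exact Bhi|].
      pose proof (Rle_abs (Series (mask N V))).
      assert (Series (mask N V) <= T2 / (16 * (A + 1))) by lra.
      assert (0 <= Series (mask N V)).
      { apply Series_ge0. intro n; unfold mask; destruct (Nat.leb n N); auto; lra. apply ex_series_mask; auto. }
      apply Rle_trans with (16 * (A + 1) * Series (mask N V)); [nra|].
      apply Rmult_le_compat_l with (r := 16 * (A + 1)) in H1; [|lra].
      replace (16 * (A + 1) * (T2 / (16 * (A + 1)))) with T2 in H1 by (field; lra). lra.
Qed.


Definition Cs (s : R) := Rpower 2 s / (s - 1).

Lemma Rpower_neg_anti a b s : 0 < s -> 0 < a <= b -> Rpower b (-s) <= Rpower a (-s).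
Proof.
  intros Hs Hab. rewrite !Rpower_Ropp. apply Rinv_le_contravar. apply Rpower_gt0.
  apply Rle_Rpower_l; lra.
Qed.

Lemma tele x s : 1 < s -> 1 <= x -> Rpower x (-s) <= Cs s * (Rpower x (1-s) - Rpower (x+1) (1-s)).
Proof.
  intros Hs Hx. set (y := x + 1). set (u := / y).
  assert (Hy : 0 < y) by (unfold y; lra).
  assert (Hu : 0 < u < 1) by (unfold u; split; [apply Rinv_0_lt_compat; lra| rewrite <- Rinv_1; apply Rinv_lt_contravar; unfold y; lra]).
  assert (Ex : x = y * (1 - u)) by (unfold u, y; field; lra).
  assert (L : ln (1 - u) <= - u).
  { rewrite <- (ln_exp (-u)). apply ln_le; [lra|]. pose proof (exp_ineq1_le (-u)); lra. }
  assert (P1 : Rpower (1 - u) (1 - s) >= 1 + (s - 1) * u).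
  { unfold Rpower. pose proof (exp_ineq1_le ((1 - s) * ln (1 - u))). nra. }
  assert (Px : Rpower x (1 - s) = Rpower y (1 - s) * Rpower (1 - u) (1 - s)).
  { rewrite Ex. rewrite Rpower_mult_distr; auto; lra. }
  assert (Py : Rpower y (1 - s) = y * Rpower y (-s)).
  { replace (1 - s) with (1 + -s) by ring. rewrite Rpower_plus, Rpower_1; auto. }
  assert (D : Rpower x (1-s) - Rpower (x+1) (1-s) >= (s - 1) * Rpower y (-s)).
  { fold y. rewrite Px. assert (0 < Rpower y (1 - s)) by apply Rpower_gt0.
    assert (Rpower y (1-s) * Rpower (1 - u) (1 - s) - Rpower y (1-s) >= Rpower y (1-s) * ((s-1) * u)) by nra.
    assert (Rpower y (1-s) * ((s-1) * u) = (s - 1) * Rpower y (-s)).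
    { rewrite Py. unfold u. field. lra. }
    lra. }
  assert (Y2 : Rpower x (-s) <= Rpower 2 s * Rpower y (-s)).
  { assert (Rpower y (-s) >= Rpower (2 * x) (-s)).
    { apply Rle_ge, Rpower_neg_anti; [lra|]. unfold y; lra. }
    rewrite <- Rpower_mult_distr in H by lra. rewrite Rpower_Ropp with (x := 2) in H.
    assert (0 < Rpower 2 s) by apply Rpower_gt0.
    assert (Rpower 2 s * Rpower y (-s) >= Rpower 2 s * (/ Rpower 2 s * Rpower x (-s))) by (apply Rle_ge, Rmult_le_compat_l; lra).
    rewrite <- Rmult_assoc, Rinv_r, Rmult_1_l in H1 by lra. lra. }
  unfold Cs. assert (0 < Rpower 2 s) by apply Rpower_gt0.
  assert (0 < Rpower y (-s)) by apply Rpower_gt0.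
  apply Rle_trans with (Rpower 2 s * Rpower y (-s)); auto.
  apply Rmult_le_reg_l with (s - 1); [lra|].
  assert (E : (s - 1) * (Rpower 2 s / (s - 1) * (Rpower x (1 - s) - Rpower y (1 - s))) = Rpower 2 s * (Rpower x (1 - s) - Rpower y (1 - s))) by (field; lra).
  rewrite E. change (x + 1) with y in D.
  assert (Rpower 2 s * ((s-1) * Rpower y (-s)) <= Rpower 2 s * (Rpower x (1-s) - Rpower y (1-s))) by (apply Rmult_le_compat_l; lra).
  lra.
Qed.

Lemma tail_gen (u : nat -> R) C s N0 : 1 < s -> (1 <= N0)%nat -> 0 <= C -> (forall k, 0 <= u k) ->
  (forall k, (N0 <= k)%nat -> u k <= C * Rpower (INR k) (-s)) ->
  ex_series u /\ forall n, (N0 <= n)%nat -> ex_series (fun j => u (n + j)%nat) /\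
     Series (fun j => u (n + j)%nat) <= C * Cs s * Rpower (INR n) (1 - s).
Proof.
  intros Hs HN0 HC H0 Hb.
  assert (HCs : 0 < Cs s) by (unfold Cs; apply Rdiv_lt_0_compat; [apply Rpower_gt0|lra]).
  assert (Hn : forall n, (N0 <= n)%nat -> ex_series (fun j => u (n + j)%nat) /\
     Series (fun j => u (n + j)%nat) <= C * Cs s * Rpower (INR n) (1 - s)).
  { intros n Hn.
    assert (St : forall k, (N0 <= k)%nat -> u k <= C * Cs s * (Rpower (INR k) (1-s) - Rpower (INR (S k)) (1-s))).
    { intros k Hk. eapply Rle_trans; [apply Hb; auto|]. rewrite Rmult_assoc. apply Rmult_le_compat_l; auto.
      rewrite S_INR. apply tele; auto. apply (le_INR 1); lia. }
    assert (Ps : forall m, sum_n (fun j => u (n + j)%nat) m <= C * Cs s * (Rpower (INR n) (1-s) - Rpower (INR (S (n + m))) (1-s))).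
    { induction m.
      - rewrite sum_O_R. rewrite Nat.add_0_r. apply St; auto.
      - rewrite sum_Sn_R. specialize (St (n + S m)%nat ltac:(lia)).
        replace (S (n + m)) with (n + S m)%nat in IHm by lia. lra. }
    apply ser_bound; [intro; auto|]. intro m. eapply Rle_trans; [apply Ps|].
    assert (0 <= C * Cs s) by (apply Rmult_le_pos; lra).
    pose proof (Rpower_gt0 (INR (S (n + m))) (1 - s)). nra. }
  split; auto. apply (ex_series_incr_n u N0). apply Hn; auto.
Qed.

Lemma pow_bound u x a b t : 0 <= u -> 0 <= a -> 0 < x -> 0 < t -> u <= a * Rpower x b ->
  rpow u t <= rpow a t * Rpower x (b * t).
Proof.
  intros Hu Ha Hx Ht H. eapply Rle_trans; [apply rpow_mono; [auto| split; [auto|exact H]]|].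
  rewrite rpow_mult by (auto; left; apply Rpower_gt0). rewrite (rpow_pos_eq (Rpower x b)) by apply Rpower_gt0.
  rewrite Rpower_mult. lra.
Qed.

Lemma decay_ex (u : nat -> R) C s N0 : 1 < s -> (1 <= N0)%nat -> 0 <= C -> (forall k, 0 <= u k) ->
  (forall k, (N0 <= k)%nat -> u k <= C * Rpower (INR k) (-s)) -> ex_series u.
Proof. intros; eapply tail_gen; eauto. Qed.


Lemma lp_q_of_1 q b : 1 <= q -> in_lp 1 b -> in_lp q b /\ lp_norm q b <= lp_norm 1 b.
Proof.
  intros Hq Hb. pose proof Hb as Hb'. apply in_lp1_iff in Hb'.
  set (s := Series (fun n => Cmod (b n))).
  assert (Hs : forall n, Cmod (b n) <= s) by (intro n; apply (term_le_series (fun n => Cmod (b n))); auto; intro; apply Cmod_ge_0).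
  assert (Hpt : forall n, 0 <= rpow (Cmod (b n)) q <= Cmod (b n) * rpow s (q - 1)).
  { intro n. split; [apply rpow_ge0|]. destruct (Cmod_ge_0 (b n)) as [Hx|Hx].
    - specialize (Hs n). replace q with (1 + (q - 1)) at 1 by ring.
      rewrite rpow_plus, rpow_1 by lra. apply Rmult_le_compat_l; [lra|].
      rewrite !rpow_pos_eq by lra. apply Rle_Rpower_l; lra.
    - rewrite <- Hx, rpow_0. lra. }
  assert (Ev : ex_series (fun n => Cmod (b n) * rpow s (q - 1))).
  { eapply ex_series_ext; [|apply (ex_series_scal (rpow s (q-1)) _ Hb')]. intro; simpl; ring. }
  destruct (ser_dom _ _ Hpt Ev) as [E1 E2]. split; [exact E1|].
  rewrite lp1_eq by auto. fold s. apply lp_small; [lra| |].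
  { apply Series_ge0; auto. intro; apply Cmod_ge_0. }
  eapply Rle_trans; [exact E2|]. rewrite Series_scal_r. fold s.
  assert (s * rpow s (q - 1) = rpow s q).
  { destruct (Rle_lt_dec s 0). rewrite !rpow_le0 by auto. ring.
    replace q with (1 + (q - 1)) at 2 by ring. rewrite rpow_plus, rpow_1 by lra. auto. }
  lra.
Qed.

Lemma compact_transfer p q T : 1 <= q -> (forall a, in_lp p a -> in_lp 1 (T a)) -> compact_op p 1 T -> compact_op p q T.
Proof.
  intros Hq HT Hc a M Ha. destruct (Hc a M Ha) as [f [b [If [Hb Hl]]]].
  exists f, b. split; auto. split; [apply lp_q_of_1; auto|].
  apply is_lim_seq_le_le with (fun _ => 0) (fun j => lp_norm 1 (seq_sub (T (a (f j))) b)); auto.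
  - intro j. split; [apply lp_norm_ge0|]. apply lp_q_of_1; auto.
    apply (lp_sub 1); [lra| |auto]. apply HT, Ha.
  - apply is_lim_seq_const.
Qed.


Definition Sf (mu : nat -> R) (n : nat) : R := Series (fun j => mu (n + j)%nat).
Definition Vf (mu : nat -> R) (n : nat) : R := Series (fun j => rpow (mu (n + j)%nat) 2).

Lemma INR_pos k : (1 <= k)%nat -> 0 < INR k.
Proof. intros; apply lt_0_INR; lia. Qed.

Lemma mu_facts (mu : nat -> R) (K r : R) (N1 : nat) (Hmu0 : forall n, 0 < mu n) (Hr : 1 < r) (HN1 : (1 <= N1)%nat) (HK : 0 <= K) (Hd : forall k, (N1 <= k)%nat -> mu k <= K * Rpower (INR k) (-r)) : ex_series mu /\ (forall n, ex_series (fun j => mu (n + j)%nat)) /\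
  (forall n, (N1 <= n)%nat -> Sf mu n <= K * Cs r * Rpower (INR n) (1 - r)) /\ (forall n, 0 <= Sf mu n).
Proof.
  destruct (tail_gen mu K r N1 Hr HN1 HK (fun k => Rlt_le _ _ (Hmu0 k)) Hd) as [E T].
  assert (En : forall n, ex_series (fun j => mu (n + j)%nat)) by (intro n; apply (ex_series_incr_n mu n); auto).
  split; auto. split; auto. split.
  - intros n Hn; apply T; auto.
  - intro n; apply Series_ge0; auto. intro; left; auto.
Qed.

Lemma S_pow_ex (mu : nat -> R) (K r : R) (N1 : nat) (Hmu0 : forall n, 0 < mu n) (Hr : 1 < r) (HN1 : (1 <= N1)%nat) (HK : 0 <= K) (Hd : forall k, (N1 <= k)%nat -> mu k <= K * Rpower (INR k) (-r)) e : 0 < e -> 1 < e * (r - 1) -> ex_series (fun n => rpow (Sf mu n) e).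
Proof.
  intros He Hre. destruct (mu_facts mu K r N1 Hmu0 Hr HN1 HK Hd) as [_ [_ [T S0]]].
  assert (HC : 0 <= K * Cs r) by (apply Rmult_le_pos; auto; unfold Cs; apply Rlt_le, Rdiv_lt_0_compat; [apply Rpower_gt0|lra]).
  apply (decay_ex _ (rpow (K * Cs r) e) (e * (r - 1)) N1); auto. apply rpow_ge0. intro; apply rpow_ge0.
  intros k Hk. replace (- (e * (r - 1))) with ((1 - r) * e) by ring.
  apply pow_bound; auto. apply INR_pos; lia.
Qed.

Lemma V_facts (mu : nat -> R) (K r : R) (N1 : nat) (Hmu0 : forall n, 0 < mu n) (Hr : 1 < r) (HN1 : (1 <= N1)%nat) (HK : 0 <= K) (Hd : forall k, (N1 <= k)%nat -> mu k <= K * Rpower (INR k) (-r)) : (forall n, ex_series (fun j => rpow (mu (n + j)%nat) 2)) /\ ex_series (Vf mu) /\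
  (forall n, 0 <= Vf mu n) /\ (3 / 2 < r -> ex_series (fun n => rpow (Vf mu n) (/2))).
Proof.
  assert (Hb : forall k, (N1 <= k)%nat -> rpow (mu k) 2 <= rpow K 2 * Rpower (INR k) (- (2 * r))).
  { intros k Hk. replace (- (2 * r)) with (-r * 2) by ring. apply pow_bound; auto; try lra.
    left; auto. apply INR_pos; lia. }
  destruct (tail_gen (fun k => rpow (mu k) 2) (rpow K 2) (2 * r) N1 ltac:(lra) HN1 (rpow_ge0 _ _)
     (fun k => rpow_ge0 _ _) Hb) as [E T].
  assert (En : forall n, ex_series (fun j => rpow (mu (n + j)%nat) 2)) by (intro n; apply (ex_series_incr_n (fun k => rpow (mu k) 2) n); auto).
  assert (V0 : forall n, 0 <= Vf mu n) by (intro n; apply Series_ge0; auto; intro; apply rpow_ge0).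
  assert (HC : 0 <= rpow K 2 * Cs (2 * r)) by (apply Rmult_le_pos; [apply rpow_ge0|]; unfold Cs; apply Rlt_le, Rdiv_lt_0_compat; [apply Rpower_gt0|lra]).
  assert (Vb : forall n, (N1 <= n)%nat -> Vf mu n <= rpow K 2 * Cs (2 * r) * Rpower (INR n) (- (2 * r - 1))).
  { intros n Hn. replace (- (2 * r - 1)) with (1 - 2 * r) by ring. apply T; auto. }
  split; auto. split; [|split; auto].
  - apply (decay_ex _ (rpow K 2 * Cs (2 * r)) (2 * r - 1) N1); auto. lra.
  - intro H32. apply (decay_ex _ (rpow (rpow K 2 * Cs (2 * r)) (/2)) (r - /2) N1); auto. lra.
    apply rpow_ge0. intro; apply rpow_ge0.
    intros k Hk. replace (- (r - /2)) with (- (2 * r - 1) * /2) by field.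
    apply pow_bound; auto. apply INR_pos; lia. lra.
Qed.

Lemma conj_facts (mu : nat -> R) (K r : R) (N1 : nat) (Hmu0 : forall n, 0 < mu n) (Hr : 1 < r) (HN1 : (1 <= N1)%nat) (HK : 0 <= K) (Hd : forall k, (N1 <= k)%nat -> mu k <= K * Rpower (INR k) (-r)) e : 0 < e -> 1 < e * (r - 1) -> 1 < r * e /\ 1 < r - / e.
Proof.
  intros He H. split. nra.
  assert (r - 1 - / e = (e * (r - 1) - 1) / e) by (field; lra).
  assert (0 < (e * (r - 1) - 1) / e) by (apply Rdiv_lt_0_compat; lra). lra.
Qed.

Lemma rows_gen (mu : nat -> R) (K r : R) (N1 : nat) (Hmu0 : forall n, 0 < mu n) (Hr : 1 < r) (HN1 : (1 <= N1)%nat) (HK : 0 <= K) (Hd : forall k, (N1 <= k)%nat -> mu k <= K * Rpower (INR k) (-r)) e (row : nat -> nat -> R) Ce : 0 < e -> 1 < e * (r - 1) -> 0 <= Ce ->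
  (forall k, ex_series (fun n => rpow (row k n) e)) ->
  (forall k, (N1 <= k)%nat -> Series (fun n => rpow (row k n) e) <= Ce * Rpower (INR k) (1 - r * e)) ->
  ex_series (fun k => Lp e (row k)).
Proof.
  intros He Hre HCe Ek Bk. destruct (conj_facts mu K r N1 Hmu0 Hr HN1 HK Hd e He Hre) as [_ H2].
  apply (decay_ex _ (rpow Ce (/e)) (r - /e) N1); auto. apply rpow_ge0. intro; apply Lp_ge0.
  intros k Hk. unfold Lp. replace (- (r - / e)) with ((1 - r * e) * / e) by (field; lra).
  apply pow_bound; auto. apply Series_ge0; auto. intro; apply rpow_ge0. apply INR_pos; lia.
  apply Rinv_0_lt_compat; auto.
Qed.

Lemma mu_pow_bound (mu : nat -> R) (K r : R) (N1 : nat) (Hmu0 : forall n, 0 < mu n) (Hr : 1 < r) (HN1 : (1 <= N1)%nat) (HK : 0 <= K) (Hd : forall k, (N1 <= k)%nat -> mu k <= K * Rpower (INR k) (-r)) e k : 0 < e -> (N1 <= k)%nat -> rpow (mu k) e <= rpow K e * Rpower (INR k) (- (r * e)).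
Proof.
  intros He Hk. replace (- (r * e)) with (-r * e) by ring. apply pow_bound; auto. left; auto. apply INR_pos; lia.
Qed.

Lemma rowsH_ex (mu : nat -> R) (K r : R) (N1 : nat) (Hmu0 : forall n, 0 < mu n) (Hr : 1 < r) (HN1 : (1 <= N1)%nat) (HK : 0 <= K) (Hd : forall k, (N1 <= k)%nat -> mu k <= K * Rpower (INR k) (-r)) e : 0 < e -> 1 < e * (r - 1) -> ex_series (fun k => Lp e (fun n => mu (n + k)%nat)).
Proof.
  intros He Hre. destruct (conj_facts mu K r N1 Hmu0 Hr HN1 HK Hd e He Hre) as [H1 _].
  destruct (tail_gen (fun k => rpow (mu k) e) (rpow K e) (r * e) N1 H1 HN1 (rpow_ge0 _ _)
     (fun k => rpow_ge0 _ _) (fun k Hk => mu_pow_bound mu K r N1 Hmu0 Hr HN1 HK Hd e k He Hk)) as [E T].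
  apply (rows_gen mu K r N1 Hmu0 Hr HN1 HK Hd e (fun k n => mu (n + k)%nat) (rpow K e * Cs (r * e))); auto.
  - apply Rmult_le_pos; [apply rpow_ge0|]; unfold Cs; apply Rlt_le, Rdiv_lt_0_compat; [apply Rpower_gt0|lra].
  - intro k. eapply ex_series_ext; [|apply (proj1 (ex_series_incr_n (fun k => rpow (mu k) e) k)); exact E].
    intro n; simpl; rewrite Nat.add_comm; auto.
  - intros k Hk. rewrite (Series_ext _ (fun n => rpow (mu (k + n)%nat) e)) by (intro n; rewrite Nat.add_comm; auto).
    apply T; auto.
Qed.

Lemma rowsC_ex (mu : nat -> R) (K r : R) (N1 : nat) (Hmu0 : forall n, 0 < mu n) (Hr : 1 < r) (HN1 : (1 <= N1)%nat) (HK : 0 <= K) (Hd : forall k, (N1 <= k)%nat -> mu k <= K * Rpower (INR k) (-r)) e : 0 < e -> 1 < e * (r - 1) ->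
  ex_series (fun k => Lp e (fun n => if Nat.leb n k then mu k else 0)).
Proof.
  intros He Hre.
  assert (Eq : forall k n, rpow (if Nat.leb n k then mu k else 0) e = keep k (fun _ => rpow (mu k) e) n).
  { intros k n. unfold keep. destruct (Nat.leb n k); auto. apply rpow_0. }
  apply (rows_gen mu K r N1 Hmu0 Hr HN1 HK Hd e (fun k n => if Nat.leb n k then mu k else 0) (2 * rpow K e)); auto.
  - pose proof (rpow_ge0 K e); lra.
  - intro k. eapply ex_series_ext; [|eexists; apply (is_series_keep (fun _ => rpow (mu k) e) k)].
    intro n; simpl; rewrite Eq; auto.
  - intros k Hk. rewrite (Series_ext _ (keep k (fun _ => rpow (mu k) e))) by (intro n; apply Eq).
    rewrite (is_series_unique _ _ (is_series_keep _ k)), sum_n_const_R.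
    pose proof (mu_pow_bound mu K r N1 Hmu0 Hr HN1 HK Hd e k He Hk). pose proof (rpow_ge0 (mu k) e). pose proof (rpow_ge0 K e).
    assert (Hk1 : 1 <= INR k) by (apply (le_INR 1); lia).
    assert (INR (S k) <= 2 * INR k) by (rewrite S_INR; lra).
    assert (Ek : INR k * Rpower (INR k) (- (r * e)) = Rpower (INR k) (1 - r * e)).
    { replace (1 - r * e) with (1 + - (r * e)) by ring. rewrite Rpower_plus, Rpower_1; auto; lra. }
    pose proof (Rpower_gt0 (INR k) (- (r * e))).
    apply Rle_trans with (2 * INR k * (rpow K e * Rpower (INR k) (- (r * e)))).
    + apply Rmult_le_compat; try lra. apply pos_INR.
    + rewrite <- Ek. lra.
Qed.


Lemma Hmu_ker mu : Hmu mu = KerOp (fun n k => mu (n + k)%nat).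
Proof. reflexivity. Qed.

Lemma Cmu_ker mu : Cmu mu = KerOp (fun n k => if Nat.leb n k then mu k else 0).
Proof.
  apply functional_extensionality; intro a. apply functional_extensionality; intro k.
  unfold Cmu, KerOp.
  assert (E1 : Series (fun n => (if Nat.leb n k then mu k else 0) * fst (a n)) = mu k * fst (sum_n a k)).
  { rewrite (Series_ext _ (keep k (fun n => mu k * fst (a n)))).
    - rewrite (is_series_unique _ _ (is_series_keep _ k)), sum_n_scal_R, sum_n_C_fst; auto.
    - intro n; unfold keep; destruct (Nat.leb n k); ring. }
  assert (E2 : Series (fun n => (if Nat.leb n k then mu k else 0) * snd (a n)) = mu k * snd (sum_n a k)).
  { rewrite (Series_ext _ (keep k (fun n => mu k * snd (a n)))).
    - rewrite (is_series_unique _ _ (is_series_keep _ k)), sum_n_scal_R, sum_n_C_snd; auto.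
    - intro n; unfold keep; destruct (Nat.leb n k); ring. }
  rewrite E1, E2. unfold Cmult, RtoC; simpl. f_equal; ring.
Qed.


Lemma conj_cond p r : 1 < p < r -> 1 < r -> 0 < conj_exp p /\ 1 < conj_exp p * (r - 1).
Proof.
  intros [Hp1 Hp2] Hr. unfold conj_exp. split. apply Rdiv_lt_0_compat; lra.
  assert (p * r - 2 * p + 1 > 0).
  { destruct (Rle_lt_dec 2 r). nra. nra. }
  assert (p / (p - 1) * (r - 1) - 1 = (p * r - 2 * p + 1) / (p - 1)) by (field; lra).
  assert (0 < (p * r - 2 * p + 1) / (p - 1)) by (apply Rdiv_lt_0_compat; lra). lra.
Qed.

Theorem proposition32 (mu : nat -> R) (r : R) :
  (forall n, 0 < mu n) ->
  (forall n, mu (S n) <= mu n) ->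
  1 < r ->
  (exists (K : R) (N : nat), forall n, (N <= n)%nat -> (0 < n)%nat ->
      mu n <= K / Rpower (INR n) r) ->
  (forall q, 1 <= q ->
     exists p0, 1 < p0 /\
       forall p, 1 < p < p0 ->
         (forall a, in_lp p a -> in_lp q (Hmu mu a)) /\
         (forall a, in_lp p a -> in_lp q (Cmu mu a)) /\
         (q = 1 -> nuclear p q (Hmu mu) /\ nuclear p q (Cmu mu)) /\
         (1 < q -> compact_op p q (Hmu mu) /\ compact_op p q (Cmu mu))) /\
  (forall a, in_lp 2 a -> in_lp 2 (Hmu mu a)) /\
  (forall a, in_lp 2 a -> in_lp 2 (Cmu mu a)) /\
  compact_op 2 2 (Hmu mu) /\ compact_op 2 2 (Cmu mu) /\
  (3 / 2 < r -> nuclear 2 2 (Hmu mu) /\ nuclear 2 2 (Cmu mu)).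
Proof.
  intros Hpos Hdec Hr [K [N HK]].
  set (N1 := Nat.max N 1).
  assert (HN1 : (1 <= N1)%nat) by (unfold N1; lia).
  assert (Hd : forall k, (N1 <= k)%nat -> mu k <= K * Rpower (INR k) (-r)).
  { intros k Hk. rewrite Rpower_Ropp. apply HK; unfold N1 in Hk; lia. }
  assert (HK0 : 0 <= K).
  { pose proof (Hd N1 (le_n _)). pose proof (Hpos N1). pose proof (Rpower_gt0 (INR N1) (-r)).
    destruct (Rle_lt_dec 0 K); auto. nra. }
  destruct (mu_facts mu K r N1 Hpos Hr HN1 HK0 Hd) as [Emu [Emun [_ S0]]].
  destruct (V_facts mu K r N1 Hpos Hr HN1 HK0 Hd) as [EVn [EV [V0 EVh]]].
  set (yH := fun n k => mu (n + k)%nat).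
  set (yC := fun n k => if Nat.leb n k then mu k else 0).
  assert (H0H : forall n k, 0 <= yH n k) by (intros; unfold yH; left; auto).
  assert (H0C : forall n k, 0 <= yC n k) by (intros n k; unfold yC; destruct (Nat.leb n k); [left; auto|lra]).
  assert (HSH : forall n, is_series (yH n) (Sf mu n)) by (intro n; apply Series_correct; apply Emun).
  assert (HSC : forall n, is_series (yC n) (Sf mu n)) by (intro n; apply shift_series; apply Series_correct; apply Emun).
  assert (HVH : forall n, is_series (fun k => rpow (yH n k) 2) (Vf mu n)) by (intro n; apply Series_correct; apply EVn).
  assert (HVC : forall n, is_series (fun k => rpow (yC n k) 2) (Vf mu n)).
  { intro n. eapply is_series_ext; [|apply (shift_series (fun k => rpow (mu k) 2)); apply Series_correct; apply EVn].
    intro k; unfold yC; destruct (Nat.leb n k); auto. rewrite rpow_0; auto. }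
  rewrite Hmu_ker, Cmu_ker. fold yH yC.
  destruct (case2 yH (Vf mu) H0H HVH EV) as [C2H1 [C2H2 C2H3]].
  destruct (case2 yC (Vf mu) H0C HVC EV) as [C2C1 [C2C2 C2C3]].
  split.
  - intros q Hq. exists r. split; auto. intros p Hp.
    destruct (conj_cond p r Hp Hr) as [He Hre].
    destruct Hp as [Hp1 Hp2].
    destruct (case1 p yH (Sf mu) Hp1 H0H HSH (S_pow_ex mu K r N1 Hpos Hr HN1 HK0 Hd _ He Hre)
       (rowsH_ex mu K r N1 Hpos Hr HN1 HK0 Hd _ He Hre)) as [C1H1 [C1H2 C1H3]].
    destruct (case1 p yC (Sf mu) Hp1 H0C HSC (S_pow_ex mu K r N1 Hpos Hr HN1 HK0 Hd _ He Hre)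
       (rowsC_ex mu K r N1 Hpos Hr HN1 HK0 Hd _ He Hre)) as [C1C1 [C1C2 C1C3]].
    split; [intros a Ha; apply lp_q_of_1; auto|].
    split; [intros a Ha; apply lp_q_of_1; auto|].
    split; [intro E; subst q; split; auto|].
    intro Hq1. split; apply compact_transfer; auto; lra.
  - repeat split; auto.
    all: try (intro H32; split; [apply C2H3| apply C2C3]; apply EVh; auto).
Qed.
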